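(* Let $\mathbf G$ and $\mathbf H$ be power-associative loops. The following are equivalent: (1) $\mathcal G(\mathbf G)\cong\mathcal G(\mathbf H)$; (2) $\mathcal G^\pm(\mathbf G)\cong\mathcal G^\pm(\mathbf H)$; (3) $\mathcal G^+(\mathbf G)\cong\mathcal G^+(\mathbf H)$.
   Context: A loop is power-associative if every subloop generated by one element is a group; powers are computed in $\langle x\rangle$. For a power-associative loop $\mathbf G$, each of the three graphs has vertex set $G$ and distinct $x,y$ are adjacent iff $y=x^n$ or $x=y^n$ for some $n$, where $n$ ranges over $\mathbb Z$ for the power graph $\mathcal G(\mathbf G)$, over $\mathbb Z\setminus\{0\}$ for the $Z^\pm$-power graph $\mathcal G^\pm(\mathbf G)$, and over the positive integers for the $N$-power graph $\mathcal G^+(\mathbf G)$. *)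

(* Defs.v *)
(* loops may be infinite, so we use plain types, not finTypes. *)
From Stdlib Require Import ZArith.

(* A loop, in the standard equational (quasigroup with identity) form:
   left division a \ b and right division b / a are the unique solutions of
   a * x = b and y * a = b. *)
Record Loop := {
  car :> Type;
  lmul : car -> car -> car;
  ldiv : car -> car -> car;
  rdiv : car -> car -> car;   (* rdiv b a = b / a *)
  lone : car;
  mul_ldiv : forall a b, lmul a (ldiv a b) = b;
  ldiv_mul : forall a b, ldiv a (lmul a b) = b;
  rdiv_mul : forall a b, lmul (rdiv b a) a = b;
  mul_rdiv : forall a b, rdiv (lmul b a) a = b;
  one_mul : forall a, lmul lone a = a;
  mul_one : forall a, lmul a lone = a
}.

Arguments lmul {l}. Arguments ldiv {l}. Arguments rdiv {l}. Arguments lone {l}.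

Inductive gen (L : Loop) (x : L) : L -> Prop :=
| gen_x : gen L x x
| gen_one : gen L x lone
| gen_mul : forall a b, gen L x a -> gen L x b -> gen L x (lmul a b)
| gen_ldiv : forall a b, gen L x a -> gen L x b -> gen L x (ldiv a b)
| gen_rdiv : forall a b, gen L x a -> gen L x b -> gen L x (rdiv a b).

(* Power-associative: every one-generated subloop is a group, i.e. the
   multiplication is associative on <x> (identity and inverses come from
   the loop structure, since <x> is a subloop). *)
Definition power_assoc (L : Loop) : Prop :=
  forall x a b c : L, gen L x a -> gen L x b -> gen L x c ->
    lmul (lmul a b) c = lmul a (lmul b c).

(* Nonnegative powers x^k (all bracketings agree inside the group <x>). *)
Definition powN (L : Loop) (x : L) (k : nat) : L :=
  Nat.iter k (fun z => lmul x z) lone.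

(* is_pow L x n y  <->  y = x^n, powers computed in the group <x>:
   x^(-k) is the inverse of x^k in <x>, which (loop inverses being unique)
   is the unique y with x^k * y = 1. *)
Definition is_pow (L : Loop) (x : L) (n : Z) (y : L) : Prop :=
  match n with
  | Z0 => y = lone
  | Zpos p => y = powN L x (Pos.to_nat p)
  | Zneg p => lmul (powN L x (Pos.to_nat p)) y = lone
  end.

Definition pgraph_adj (S : Z -> Prop) (L : Loop) (x y : L) : Prop :=
  x <> y /\ exists n : Z, S n /\ (is_pow L x n y \/ is_pow L y n x).

Definition power_adj (L : Loop) := pgraph_adj (fun _ => True) L.
Definition powerZpm_adj (L : Loop) := pgraph_adj (fun n => n <> 0%Z) L.
Definition powerN_adj (L : Loop) := pgraph_adj (fun n => (0 < n)%Z) L.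

Definition graph_iso {A B : Type} (adjA : A -> A -> Prop) (adjB : B -> B -> Prop)
  : Prop :=
  exists (f : A -> B) (g : B -> A),
    (forall a, g (f a) = a) /\ (forall b, f (g b) = b) /\
    (forall a1 a2, adjA a1 a2 <-> adjB (f a1) (f a2)).

(* Main.v *)
Require Import Defs.
From Stdlib Require Import ZArith Lia.
From Stdlib Require Import Classical ClassicalEpsilon FunctionalExtensionality PropExtensionality.
Open Scope Z_scope.


Definition zp {L : Loop} (x : L) (n : Z) : L :=
  match n with
  | Z0 => lone
  | Zpos p => powN L x (Pos.to_nat p)
  | Zneg p => ldiv (powN L x (Pos.to_nat p)) lone
  end.

Definition inv {L : Loop} (x : L) : L := ldiv x lone.

Lemma powN_gen {L : Loop} (x : L) k : gen L x (powN L x k).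
Proof. induction k; simpl. apply gen_one. apply gen_mul; auto. apply gen_x. Qed.

Lemma zp_gen {L : Loop} (x : L) n : gen L x (zp x n).
Proof. destruct n; simpl. apply gen_one. apply powN_gen.
  apply gen_ldiv. apply powN_gen. apply gen_one. Qed.

Lemma inv_r {L : Loop} (a : L) : lmul a (inv a) = lone.
Proof. unfold inv. apply mul_ldiv. Qed.

Lemma inv_unique {L : Loop} (a b : L) : lmul a b = lone -> b = inv a.
Proof. intros H. unfold inv. rewrite <- H. rewrite ldiv_mul. reflexivity. Qed.

Lemma rcancel {L : Loop} (a b c : L) : lmul a c = lmul b c -> a = b.
Proof. intros H. rewrite <- (mul_rdiv _ c a), <- (mul_rdiv _ c b), H. reflexivity. Qed.

Lemma lcancel {L : Loop} (a b c : L) : lmul c a = lmul c b -> a = b.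
Proof. intros H. rewrite <- (ldiv_mul _ c a), <- (ldiv_mul _ c b), H. reflexivity. Qed.

Lemma inv_gen {L : Loop} (x a : L) : gen L x a -> gen L x (inv a).
Proof. intros. unfold inv. apply gen_ldiv; auto. apply gen_one. Qed.

Lemma inv_l {L : Loop} (hL : power_assoc L) (x a : L) : gen L x a -> lmul (inv a) a = lone.
Proof. intros Ha.
  assert (Hi : gen L x (inv a)) by (apply inv_gen; auto).
  apply (rcancel _ _ (inv a)).
  rewrite hL with (x:=x); auto. rewrite inv_r. rewrite mul_one, one_mul. reflexivity.
Qed.

Lemma powN_add {L : Loop} (hL : power_assoc L) (x : L) m n :
  lmul (powN L x m) (powN L x n) = powN L x (m + n).
Proof. induction m; simpl. apply one_mul.
  rewrite hL with (x:=x); try apply gen_x; try apply powN_gen. rewrite IHm. reflexivity. Qed.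

Lemma powN_comm1 {L : Loop} (hL : power_assoc L) (x : L) n :
  lmul x (powN L x n) = lmul (powN L x n) x.
Proof. assert (E : powN L x 1 = x) by (simpl; apply mul_one).
  rewrite <- E at 1 4. rewrite !powN_add by auto. f_equal. lia. Qed.

Lemma zp_nat {L : Loop} (x : L) k : zp x (Z.of_nat k) = powN L x k.
Proof. destruct k. reflexivity. simpl. rewrite SuccNat2Pos.id_succ. reflexivity. Qed.

Lemma inv_one {L : Loop} : @inv L lone = lone.
Proof. symmetry. apply inv_unique. apply mul_one. Qed.

Lemma zp_negnat {L : Loop} (x : L) k : zp x (- Z.of_nat k) = inv (powN L x k).
Proof. destruct k. simpl. symmetry. apply inv_one. simpl. rewrite SuccNat2Pos.id_succ. reflexivity. Qed.

Lemma zp_succ {L : Loop} (hL : power_assoc L) (x : L) n :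
  zp x (Z.succ n) = lmul x (zp x n).
Proof.
  destruct (Z_lt_le_dec n 0) as [Hn|Hn].
  - destruct (Z_of_nat_complete_inf (- n - 1)) as [k Hk]; [lia|].
    replace n with (- Z.of_nat (S k)) by lia.
    replace (Z.succ (- Z.of_nat (S k))) with (- Z.of_nat k) by lia.
    rewrite !zp_negnat. simpl.
    symmetry. apply inv_unique.
    rewrite <- hL with (x:=x); try apply gen_x; try apply powN_gen; try (apply inv_gen; apply gen_mul; [apply gen_x|apply powN_gen]).
    rewrite <- powN_comm1 by auto. apply inv_r.
  - destruct (Z_of_nat_complete_inf n Hn) as [k Hk]. subst n.
    replace (Z.succ (Z.of_nat k)) with (Z.of_nat (S k)) by lia.
    rewrite !zp_nat. reflexivity.
Qed.

Lemma zp_pred {L : Loop} (hL : power_assoc L) (x : L) n :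
  zp x (Z.pred n) = lmul (inv x) (zp x n).
Proof.
  replace n with (Z.succ (Z.pred n)) at 2 by lia. rewrite zp_succ by auto.
  rewrite <- hL with (x:=x); try apply gen_x; try apply zp_gen; try (apply inv_gen; apply gen_x).
  rewrite inv_l with (x:=x) by (auto; apply gen_x). rewrite one_mul. reflexivity.
Qed.

Lemma zp_add {L : Loop} (hL : power_assoc L) (x : L) m n :
  zp x (m + n) = lmul (zp x m) (zp x n).
Proof.
  induction m using Z.peano_ind.
  - simpl. rewrite one_mul. reflexivity.
  - replace (Z.succ m + n) with (Z.succ (m + n)) by lia. rewrite !zp_succ, IHm by auto.
    symmetry. apply (hL x); try apply gen_x; apply zp_gen.
  - replace (Z.pred m + n) with (Z.pred (m + n)) by lia. rewrite !zp_pred, IHm by auto.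
    symmetry. apply (hL x); try apply zp_gen; apply inv_gen; apply gen_x.
Qed.

Lemma zp_0 {L : Loop} (x : L) : zp x 0 = lone. Proof. reflexivity. Qed.
Lemma zp_1 {L : Loop} (x : L) : zp x 1 = x. Proof. simpl. apply mul_one. Qed.

Lemma zp_inv_r {L : Loop} (hL : power_assoc L) (x : L) n : lmul (zp x n) (zp x (- n)) = lone.
Proof. rewrite <- zp_add by auto. replace (n + - n) with 0 by lia. reflexivity. Qed.

Lemma zp_opp {L : Loop} (hL : power_assoc L) (x : L) n : zp x (- n) = inv (zp x n).
Proof. apply inv_unique. apply zp_inv_r; auto. Qed.

Lemma zp_m1 {L : Loop} (hL : power_assoc L) (x : L) : zp x (-1) = inv x.
Proof. change (-1) with (- (1)). rewrite zp_opp, zp_1 by auto. reflexivity. Qed.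

Lemma zp_one {L : Loop} (hL : power_assoc L) n : zp (@lone L) n = lone.
Proof. induction n using Z.peano_ind. reflexivity.
  rewrite zp_succ, IHn by auto. apply mul_one.
  rewrite zp_pred, IHn by auto. rewrite mul_one. apply inv_one. Qed.

Lemma zp_mul {L : Loop} (hL : power_assoc L) (x : L) m n :
  zp (zp x m) n = zp x (m * n).
Proof.
  induction n using Z.peano_ind.
  - rewrite Z.mul_0_r. reflexivity.
  - rewrite zp_succ, IHn by auto. rewrite <- zp_add by auto. f_equal. lia.
  - rewrite zp_pred, IHn by auto. rewrite <- zp_opp by auto. rewrite <- zp_add by auto. f_equal. lia.
Qed.

Lemma inv_inv {L : Loop} (hL : power_assoc L) (x : L) : inv (inv x) = x.
Proof. rewrite <- !zp_m1 by auto. rewrite zp_mul by auto. apply zp_1. Qed.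

Lemma zp_inv {L : Loop} (hL : power_assoc L) (x : L) n : zp (inv x) n = zp x (- n).
Proof. rewrite <- zp_m1, zp_mul by auto. f_equal; lia. Qed.

Lemma zp_comm {L : Loop} (hL : power_assoc L) (x : L) m n :
  lmul (zp x m) (zp x n) = lmul (zp x n) (zp x m).
Proof. rewrite <- !zp_add by auto. f_equal; lia. Qed.

Lemma is_pow_iff {L : Loop} (hL : power_assoc L) (x : L) n y : is_pow L x n y <-> y = zp x n.
Proof. destruct n; simpl; try tauto. split; intro H.
  - rewrite <- H. rewrite ldiv_mul. reflexivity.
  - subst. apply mul_ldiv.
Qed.


Definition Tor {L : Loop} (x : L) := exists k, 0 < k /\ zp x k = lone.
Definition CN (S : Z -> Prop) {L : Loop} (x z : L) :=
  exists n, S n /\ (z = zp x n \/ x = zp z n).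
Definition SA : Z -> Prop := fun _ => True.
Definition SB : Z -> Prop := fun n => n <> 0.
Definition SC : Z -> Prop := fun n => 0 < n.

Lemma adj_iff {L : Loop} (hL : power_assoc L) S (x y : L) :
  pgraph_adj S L x y <-> x <> y /\ CN S x y.
Proof. unfold pgraph_adj, CN. split; intros [H1 [n [Hn H]]]; split; auto; exists n; split; auto;
  rewrite !is_pow_iff in * by auto; tauto. Qed.

Lemma adj_sym {L : Loop} S (x y : L) : pgraph_adj S L x y -> pgraph_adj S L y x.
Proof. unfold pgraph_adj. intros [H1 [n [Hn H]]]. split; auto. exists n; tauto. Qed.

Lemma adj_irr {L : Loop} S (x : L) : ~ pgraph_adj S L x x.
Proof. unfold pgraph_adj. tauto. Qed.

Lemma closed_nb {L : Loop} (hL : power_assoc L) S (S1 : S 1) (x z : L) :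
  (z = x \/ pgraph_adj S L x z) <-> CN S x z.
Proof. rewrite adj_iff by auto. split.
  - intros [->|[_ H]]; auto. exists 1. split; auto. left. symmetry. apply zp_1.
  - intros H. destruct (classic (z = x)); auto.
Qed.

Definition twin {V : Type} (R : V -> V -> Prop) (x y : V) :=
  forall z, (z = x \/ R x z) <-> (z = y \/ R y z).

Lemma twin_refl {V} (R : V -> V -> Prop) x : twin R x x. Proof. intro; tauto. Qed.
Lemma twin_sym {V} (R : V -> V -> Prop) x y : twin R x y -> twin R y x.
Proof. intros H z; specialize (H z); tauto. Qed.
Lemma twin_trans {V} (R : V -> V -> Prop) x y w : twin R x y -> twin R y w -> twin R x w.
Proof. intros H1 H2 z; specialize (H1 z); specialize (H2 z); tauto. Qed.

Lemma twin_adj_iff {L : Loop} (hL : power_assoc L) S (S1 : S 1) (x y : L) :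
  twin (pgraph_adj S L) x y <-> forall z, CN S x z <-> CN S y z.
Proof. unfold twin. split; intros H z; specialize (H z); rewrite !closed_nb in * by auto; auto. Qed.

Lemma CN_transfer {L : Loop} (hL : power_assoc L) S (Smul : forall a b, S a -> S b -> S (a * b))
  (x y : L) a b : x = zp y a -> y = zp x b -> S a -> S b ->
  forall z, CN S x z -> CN S y z.
Proof. intros Hx Hy Sa Sb z [n [Sn [H|H]]].
  - exists (a * n). split; auto. left. rewrite H, Hx, zp_mul by auto. reflexivity.
  - exists (n * b). split; auto. right. rewrite Hy, H, zp_mul by auto. reflexivity.
Qed.

Lemma twin_pow {L : Loop} (hL : power_assoc L) S (S1 : S 1)
  (Smul : forall a b, S a -> S b -> S (a * b))
  (x y : L) a b : x = zp y a -> y = zp x b -> S a -> S b -> twin (pgraph_adj S L) x y.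
Proof. intros. rewrite twin_adj_iff by auto. intro z. split; eapply CN_transfer; eauto. Qed.

Lemma SA_mul : forall a b, SA a -> SA b -> SA (a * b). Proof. unfold SA; auto. Qed.
Lemma SB_mul : forall a b, SB a -> SB b -> SB (a * b). Proof. unfold SB; intros; lia. Qed.
Lemma SC_mul : forall a b, SC a -> SC b -> SC (a * b). Proof. unfold SC; intros; lia. Qed.

Lemma Tor_of {L : Loop} (hL : power_assoc L) (x : L) k : k <> 0 -> zp x k = lone -> Tor x.
Proof. intros Hk H. destruct (Z_lt_le_dec 0 k). exists k; auto.
  exists (- k). split. lia. rewrite zp_opp, H by auto. apply inv_one. Qed.

Lemma Tor_one {L : Loop} : Tor (@lone L).
Proof. exists 1. split. lia. apply zp_1. Qed.

Lemma Tor_zp {L : Loop} (hL : power_assoc L) (x : L) n : Tor x -> Tor (zp x n).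
Proof. intros [k [Hk H]]. exists k. split; auto. rewrite zp_mul by auto.
  replace (n * k) with (k * n) by lia. rewrite <- zp_mul, H by auto. apply zp_one; auto. Qed.

Lemma Tor_root {L : Loop} (hL : power_assoc L) (x z : L) n : n <> 0 -> x = zp z n -> Tor x -> Tor z.
Proof. intros Hn Hx [k [Hk H]]. apply (Tor_of hL z (n * k)). lia.
  rewrite <- zp_mul, <- Hx by auto. auto. Qed.

Lemma Tor_inv {L : Loop} (hL : power_assoc L) (x : L) : Tor x -> Tor (inv x).
Proof. intro. rewrite <- zp_m1 by auto. apply Tor_zp; auto. Qed.

Lemma notTor_inj {L : Loop} (hL : power_assoc L) (x : L) a b : ~ Tor x -> zp x a = zp x b -> a = b.
Proof. intros HT H. destruct (Z.eq_dec a b); auto. exfalso. apply HT.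
  apply (Tor_of hL x (a - b)). lia.
  replace (a - b) with (a + - b) by lia. rewrite zp_add, H by auto. apply zp_inv_r; auto. Qed.

Lemma zp_e_mul {L : Loop} (hL : power_assoc L) (x : L) K q : zp x K = lone -> zp x (K * q) = lone.
Proof. intros H. rewrite <- zp_mul, H by auto. apply zp_one; auto. Qed.

Lemma zp_mod {L : Loop} (hL : power_assoc L) (x : L) K n : 0 < K -> zp x K = lone ->
  zp x n = zp x (n mod K).
Proof. intros HK H. rewrite (Z_div_mod_eq_full n K) at 1.
  rewrite zp_add, zp_e_mul by auto. apply one_mul. Qed.

Lemma min_exp {L : Loop} (x : L) : Tor x ->
  exists K, 0 < K /\ zp x K = lone /\ forall k, 0 < k < K -> zp x k <> lone.
Proof.
  intros [k [Hk H]].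
  assert (G : forall m : nat, forall k, 0 < k -> (Z.to_nat k <= m)%nat -> zp x k = lone ->
     exists K, 0 < K /\ zp x K = lone /\ forall k, 0 < k < K -> zp x k <> lone).
  { induction m; intros k0 Hk0 Hm Hz. lia.
    destruct (classic (exists j, 0 < j < k0 /\ zp x j = lone)) as [[j [Hj Hjz]]|Hn].
    - apply (IHm j); auto; lia.
    - exists k0. repeat split; auto. intros j Hj Hjz. apply Hn. eauto. }
  apply (G (Z.to_nat k) k); auto.
Qed.

Lemma min_exp_div {L : Loop} (hL : power_assoc L) (x : L) K n : 0 < K -> zp x K = lone ->
  (forall k, 0 < k < K -> zp x k <> lone) -> zp x n = lone -> n mod K = 0.
Proof. intros HK H Hmin Hn. rewrite (zp_mod hL x K n) in Hn by auto.
  destruct (Z.eq_dec (n mod K) 0); auto. exfalso. apply (Hmin (n mod K)); auto.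
  pose proof (Z.mod_pos_bound n K HK). lia. Qed.


Definition isoF {A B : Type} (RA : A -> A -> Prop) (RB : B -> B -> Prop) (f : A -> B) (g : B -> A) :=
  (forall a, g (f a) = a) /\ (forall b, f (g b) = b) /\ (forall a1 a2, RA a1 a2 <-> RB (f a1) (f a2)).

Lemma graph_iso_iff {A B : Type} RA RB : @graph_iso A B RA RB <-> exists f g, isoF RA RB f g.
Proof. reflexivity. Qed.

Lemma isoF_sym {A B} RA RB (f : A -> B) g : isoF RA RB f g -> isoF RB RA g f.
Proof. intros [H1 [H2 H3]]. repeat split; auto; intros.
  - rewrite H3, !H2. auto.
  - rewrite H3 in H. rewrite !H2 in H. auto. Qed.

Lemma isoF_comp {A B C} RA RB RC (f : A -> B) g (f' : B -> C) g' :
  isoF RA RB f g -> isoF RB RC f' g' -> isoF RA RC (fun a => f' (f a)) (fun c => g (g' c)).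
Proof. intros [H1 [H2 H3]] [K1 [K2 K3]]. repeat split; intros.
  - rewrite K1, H1. auto.
  - rewrite H2, K2. auto.
  - rewrite H3, K3 in H. auto.
  - rewrite H3, K3. auto. Qed.

Lemma iso_ex {A B} RA RB (f : A -> B) g : isoF RA RB f g -> forall b, exists a, b = f a.
Proof. intros [_ [H2 _]] b. exists (g b). auto. Qed.

Lemma iso_inj {A B} RA RB (f : A -> B) g : isoF RA RB f g -> forall a1 a2, f a1 = f a2 -> a1 = a2.
Proof. intros [H1 _] a1 a2 E. rewrite <- (H1 a1), <- (H1 a2), E. auto. Qed.

Lemma nb_iso {A B} RA RB (f : A -> B) g : isoF RA RB f g ->
  forall a x, (f a = f x \/ RB (f x) (f a)) <-> (a = x \/ RA x a).
Proof. intros I a x. pose proof (iso_inj _ _ _ _ I) as Inj. destruct I as [H1 [H2 H3]].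
  rewrite H3. split; intros [E|E]; auto. subst; auto. Qed.

Lemma twin_iso {A B} RA RB (f : A -> B) g : isoF RA RB f g ->
  forall x y, twin RA x y <-> twin RB (f x) (f y).
Proof. intros I x y. split; intros T z.
  - destruct (iso_ex _ _ _ _ I z) as [a ->]. rewrite !(nb_iso _ _ _ _ I). apply T.
  - specialize (T (f z)). rewrite !(nb_iso _ _ _ _ I) in T. auto.
Qed.

Definition ET1 {V} (R : V -> V -> Prop) x :=
  exists t, t <> x /\ twin R x t /\ forall t', twin R x t' -> t' = x \/ t' = t.
Definition NT {V} (R : V -> V -> Prop) x := forall t, twin R x t -> t = x.
Definition NA {V} (R : V -> V -> Prop) x := exists s t, R x s /\ R x t /\ s <> t /\ ~ R s t.

Inductive reach {V} (R : V -> V -> Prop) (x : V) : V -> Prop :=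
| r_refl : reach R x x
| r_step : forall y z, reach R x y -> R y z -> reach R x z.

Lemma reach_trans {V} (R : V -> V -> Prop) x y z : reach R x y -> reach R y z -> reach R x z.
Proof. intros H1 H2. induction H2; auto. eapply r_step; eauto. Qed.

Lemma reach1 {V} (R : V -> V -> Prop) x y : R x y -> reach R x y.
Proof. intros. eapply r_step; eauto. constructor. Qed.

Lemma reach_iso {A B} RA RB (f : A -> B) g : isoF RA RB f g ->
  forall x y, reach RA x y -> reach RB (f x) (f y).
Proof. intros [H1 [H2 H3]] x y H. induction H. constructor.
  eapply r_step; eauto. apply H3; auto. Qed.

Lemma ET1_iso {A B} RA RB (f : A -> B) g : isoF RA RB f g -> forall x, ET1 RA x -> ET1 RB (f x).
Proof. intros I x [t [Ht [T U]]]. pose proof (iso_inj _ _ _ _ I) as Inj.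
  exists (f t). split; [|split].
  - intro E. apply Inj in E. auto.
  - apply (twin_iso _ _ _ _ I); auto.
  - intros t' T'. destruct (iso_ex _ _ _ _ I t') as [a ->].
    apply (twin_iso _ _ _ _ I) in T'. destruct (U a T'); subst; auto.
Qed.

Lemma NT_iso {A B} RA RB (f : A -> B) g : isoF RA RB f g -> forall x, NT RA x -> NT RB (f x).
Proof. intros I x N t T. destruct (iso_ex _ _ _ _ I t) as [a ->].
  apply (twin_iso _ _ _ _ I) in T. rewrite (N a T). auto. Qed.

Lemma NA_iso {A B} RA RB (f : A -> B) g : isoF RA RB f g -> forall x, NA RA x -> NA RB (f x).
Proof. intros I x [s [t [H1 [H2 [H3 H4]]]]]. pose proof (iso_inj _ _ _ _ I) as Inj.
  destruct I as [K1 [K2 K3]]. exists (f s), (f t).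
  split; [apply K3; auto|split; [apply K3; auto|split]].
  intro E; apply Inj in E; auto.
  rewrite <- K3; auto. Qed.

Definition PhiB {V} (R : V -> V -> Prop) x := ET1 R x /\ NA R x.
Definition PhiC {V} (R : V -> V -> Prop) x := NT R x /\ NA R x.
Definition Psi {V} (R : V -> V -> Prop) (P : (V -> V -> Prop) -> V -> Prop) x :=
  forall w, reach R x w -> P R w.

Lemma Psi_pull {A B} RA RB (f : A -> B) g P : isoF RA RB f g ->
  forall x, Psi RA P x -> forall a, reach RB (f x) (f a) -> P RA a.
Proof. intros I x H a Hw. pose proof I as [K1 [K2 K3]].
  apply (reach_iso _ _ _ _ (isoF_sym _ _ _ _ I)) in Hw. rewrite !K1 in Hw. auto. Qed.

Lemma PsiB_iso {A B} RA RB (f : A -> B) g : isoF RA RB f g ->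
  forall x, Psi RA PhiB x -> Psi RB PhiB (f x).
Proof. intros I x P w Hw. destruct (iso_ex _ _ _ _ I w) as [a ->].
  destruct (Psi_pull _ _ _ _ _ I x P a Hw). split.
  apply (ET1_iso _ _ _ _ I); auto. apply (NA_iso _ _ _ _ I); auto. Qed.

Lemma PsiC_iso {A B} RA RB (f : A -> B) g : isoF RA RB f g ->
  forall x, Psi RA PhiC x -> Psi RB PhiC (f x).
Proof. intros I x P w Hw. destruct (iso_ex _ _ _ _ I w) as [a ->].
  destruct (Psi_pull _ _ _ _ _ I x P a Hw). split.
  apply (NT_iso _ _ _ _ I); auto. apply (NA_iso _ _ _ _ I); auto. Qed.

Definition swap {V : Type} (u v w : V) : V :=
  if excluded_middle_informative (w = u) then v
  else if excluded_middle_informative (w = v) then u else w.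

Lemma swap_invol {V} (u v w : V) : swap u v (swap u v w) = w.
Proof. unfold swap. repeat (destruct excluded_middle_informative; subst; try congruence). Qed.

Lemma swap_u {V} (u v : V) : swap u v u = v.
Proof. unfold swap. destruct excluded_middle_informative; congruence. Qed.
Lemma swap_v {V} (u v : V) : swap u v v = u.
Proof. unfold swap. repeat destruct excluded_middle_informative; congruence. Qed.
Lemma swap_o {V} (u v w : V) : w <> u -> w <> v -> swap u v w = w.
Proof. unfold swap. repeat destruct excluded_middle_informative; congruence. Qed.

Lemma twin_other {V} (R : V -> V -> Prop) u v w : twin R u v -> w <> u -> w <> v -> (R u w <-> R v w).
Proof. intros T H1 H2. specialize (T w). intuition; congruence. Qed.

Lemma swap_iso {V} (R : V -> V -> Prop) (Rsym : forall a b, R a b -> R b a)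
  (Rirr : forall a, ~ R a a) u v : twin R u v -> isoF R R (swap u v) (swap u v).
Proof. intros T. split; [intros; apply swap_invol|split; [intros; apply swap_invol|]].
  assert (Rs : forall a b, R a b <-> R b a) by (split; apply Rsym).
  intros a1 a2.
  destruct (classic (a1 = u)) as [->|n1]; [rewrite swap_u|destruct (classic (a1 = v)) as [->|n1']; [rewrite swap_v|rewrite (swap_o u v a1) by auto]];
  (destruct (classic (a2 = u)) as [->|n2]; [rewrite swap_u|destruct (classic (a2 = v)) as [->|n2']; [rewrite swap_v|rewrite (swap_o u v a2) by auto]]);
  try (split; intro HH; exfalso; eapply Rirr; eassumption); try apply Rs;
  try (apply twin_other; auto; fail); try (symmetry; apply twin_other; auto; fail).
  all: try (rewrite (Rs a1 u), (Rs a1 v); apply twin_other; auto; fail).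
  all: try (rewrite (Rs a1 u), (Rs a1 v); symmetry; apply twin_other; auto; fail).
  all: try tauto.
  all: try (subst; split; intro HH; exfalso; eapply Rirr; eassumption).
Qed.


Definition RG (L : Loop) (x y : L) := power_adj L x y /\ x <> lone /\ y <> lone.

Lemma adjA {L : Loop} (hL : power_assoc L) (x y : L) : power_adj L x y <-> x <> y /\ CN SA x y.
Proof. exact (adj_iff hL SA x y). Qed.
Lemma adjB {L : Loop} (hL : power_assoc L) (x y : L) : powerZpm_adj L x y <-> x <> y /\ CN SB x y.
Proof. exact (adj_iff hL SB x y). Qed.
Lemma adjC {L : Loop} (hL : power_assoc L) (x y : L) : powerN_adj L x y <-> x <> y /\ CN SC x y.
Proof. exact (adj_iff hL SC x y). Qed.

Lemma twinB_iff {L : Loop} (hL : power_assoc L) (x y : L) :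
  twin (powerZpm_adj L) x y <-> forall z, CN SB x z <-> CN SB y z.
Proof. exact (twin_adj_iff hL SB ltac:(unfold SB; lia) x y). Qed.
Lemma twinC_iff {L : Loop} (hL : power_assoc L) (x y : L) :
  twin (powerN_adj L) x y <-> forall z, CN SC x z <-> CN SC y z.
Proof. exact (twin_adj_iff hL SC ltac:(unfold SC; lia) x y). Qed.
Lemma twinA_iff {L : Loop} (hL : power_assoc L) (x y : L) :
  twin (power_adj L) x y <-> forall z, CN SA x z <-> CN SA y z.
Proof. exact (twin_adj_iff hL SA I x y). Qed.

Lemma RG_sym {L : Loop} (x y : L) : RG L x y -> RG L y x.
Proof. intros [H [H1 H2]]. split; auto. apply adj_sym; auto. Qed.
Lemma RG_irr {L : Loop} (x : L) : ~ RG L x x.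
Proof. intros [H _]. apply (adj_irr _ _ H). Qed.

Lemma notTor_one {L : Loop} (x : L) : ~ Tor x -> x <> lone.
Proof. intros H ->. apply H, Tor_one. Qed.

Lemma CN_I {L : Loop} (hL : power_assoc L) S (x y : L) : ~ Tor x -> CN S x y ->
  (forall n, S n -> n <> 0) -> ~ Tor y.
Proof. intros HT [n [Sn [H|H]]] HS Ty; apply HT.
  - eapply Tor_root; eauto.
  - subst x. apply Tor_zp; auto.
Qed.

Lemma B_I {L : Loop} (hL : power_assoc L) (x y : L) : ~ Tor x -> powerZpm_adj L x y -> ~ Tor y.
Proof. intros H A. apply adjB in A; auto. destruct A as [_ A]. eapply CN_I; eauto. Qed.

Lemma C_I {L : Loop} (hL : power_assoc L) (x y : L) : ~ Tor x -> powerN_adj L x y -> ~ Tor y.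
Proof. intros H A. apply adjC in A; auto. destruct A as [_ A]. eapply CN_I; eauto.
  intros n Hn; unfold SC in Hn; lia. Qed.

Lemma A_B_I {L : Loop} (hL : power_assoc L) (x y : L) : ~ Tor x -> y <> lone ->
  (power_adj L x y <-> powerZpm_adj L x y).
Proof. intros HT Hy. rewrite adjA, adjB by auto. split; intros [Hne [n [Sn H]]]; split; auto.
  - exists n. split; auto. intro; subst n. simpl in H. destruct H; auto.
    apply HT. subst. apply Tor_one.
  - exists n. split; auto. exact I.
Qed.

Lemma RG_I {L : Loop} (hL : power_assoc L) (x y : L) : ~ Tor x ->
  (RG L x y <-> powerZpm_adj L x y).
Proof. intros HT. unfold RG. split.
  - intros [A [_ Hy]]. apply (A_B_I hL x y HT Hy); auto.
  - intros A. assert (Hy : y <> lone) by (intro; subst; apply (B_I hL x lone HT A), Tor_one).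
    split; [apply (A_B_I hL x y HT Hy); auto|split; auto]. apply notTor_one; auto.
Qed.

Lemma RG_I_step {L : Loop} (hL : power_assoc L) (x y : L) : ~ Tor x -> RG L x y -> ~ Tor y.
Proof. intros H A. apply (RG_I hL x y H) in A. eapply B_I; eauto. Qed.

Lemma twinB_pow_I {L : Loop} (hL : power_assoc L) (x : L) n : ~ Tor x ->
  twin (powerZpm_adj L) x (zp x n) -> n <> 0 -> n = 1 \/ n = -1.
Proof.
  intros HT T Hn. rewrite (twinB_iff hL) in T.
  destruct (Z.eq_dec n 1); auto. destruct (Z.eq_dec n (-1)); auto. exfalso.
  set (m := if Z.eq_dec n (-2) then -3 else n + 1).
  assert (Hm : m <> 0) by (unfold m; destruct Z.eq_dec; lia).
  assert (Hc : CN SB x (zp x m)) by (exists m; split; auto).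
  apply T in Hc. destruct Hc as [k [Sk [H|H]]]; unfold SB in Sk;
    rewrite zp_mul in H by auto; apply notTor_inj in H; auto; unfold m in H; destruct Z.eq_dec.
  - lia.
  - assert (n * (k - 1) = 1) by lia. apply Z.eq_mul_1 in H0. lia.
  - lia.
  - assert ((n+1) * (1 - k) = 1) by lia. apply Z.eq_mul_1 in H0. lia.
Qed.

Lemma twinB_I {L : Loop} (hL : power_assoc L) (x y : L) : ~ Tor x ->
  (twin (powerZpm_adj L) x y <-> y = x \/ y = inv x).
Proof.
  intros HT. split.
  - intros T. assert (Hy : CN SB x y).
    { rewrite (twinB_iff hL) in T. apply T. exists 1. split. unfold SB; lia.
      left. symmetry; apply zp_1. }
    destruct Hy as [n [Sn [H|H]]].
    + subst y. destruct (twinB_pow_I hL x n HT T Sn) as [->| ->].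
      left; apply zp_1. right; apply zp_m1; auto.
    + assert (HTy : ~ Tor y) by (intro; apply HT; subst; apply Tor_zp; auto).
      subst x. apply twin_sym in T. destruct (twinB_pow_I hL y n HTy T Sn) as [->| ->].
      left; symmetry; apply zp_1. right. rewrite zp_m1, inv_inv by auto. auto.
  - intros [->| ->]. apply twin_refl.
    apply (twin_pow hL SB) with (a := -1) (b := -1); unfold SB; try lia; try apply SB_mul.
    rewrite zp_m1, inv_inv by auto; auto. rewrite zp_m1 by auto; auto.
Qed.

Lemma twinC_pow_I {L : Loop} (hL : power_assoc L) (x : L) n : ~ Tor x ->
  twin (powerN_adj L) x (zp x n) -> 0 < n -> n = 1.
Proof.
  intros HT T Hn. rewrite (twinC_iff hL) in T.
  destruct (Z.eq_dec n 1); auto. exfalso.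
  assert (Hc : CN SC x (zp x (n + 1))) by (exists (n+1); split; unfold SC; auto; lia).
  apply T in Hc. destruct Hc as [k [Sk [H|H]]]; unfold SC in Sk;
    rewrite zp_mul in H by auto; apply notTor_inj in H; auto.
  - destruct (Z.eq_dec k 1). subst; lia. assert (n * k >= n * 2) by nia. lia.
  - nia.
Qed.

Lemma twinC_I {L : Loop} (hL : power_assoc L) (x y : L) : ~ Tor x ->
  (twin (powerN_adj L) x y <-> y = x).
Proof.
  intros HT. split.
  - intros T. assert (Hy : CN SC x y).
    { rewrite (twinC_iff hL) in T. apply T. exists 1. split. unfold SC; lia.
      left. symmetry; apply zp_1. }
    destruct Hy as [n [Sn [H|H]]].
    + subst y. rewrite (twinC_pow_I hL x n HT T Sn). apply zp_1.
    + assert (HTy : ~ Tor y) by (intro; apply HT; subst; apply Tor_zp; auto).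
      subst x. apply twin_sym in T. rewrite (twinC_pow_I hL y n HTy T Sn). symmetry; apply zp_1.
  - intros ->. apply twin_refl.
Qed.

Lemma NA_I {L : Loop} (hL : power_assoc L) S (x : L) : ~ Tor x -> S 2 -> S 3 ->
  (forall n, S n -> 0 < n \/ n < 0) -> NA (pgraph_adj S L) x.
Proof.
  intros HT S2 S3 HS. exists (zp x 2), (zp x 3).
  assert (inj := notTor_inj hL x).
  split; [|split; [|split]]; try (rewrite adj_iff by auto).
  - split. intro E. rewrite <- (zp_1 x) in E at 1. apply inj in E; auto. lia.
    exists 2. split; auto.
  - split. intro E. rewrite <- (zp_1 x) in E at 1. apply inj in E; auto. lia.
    exists 3. split; auto.
  - intro E. apply inj in E; auto. lia.
  - intros [_ [k [Sk [H|H]]]]; rewrite zp_mul in H by auto; apply inj in H; auto; lia.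
Qed.

Lemma PhiB_B_I {L : Loop} (hL : power_assoc L) (x : L) : ~ Tor x -> PhiB (powerZpm_adj L) x.
Proof.
  intros HT. split.
  - exists (inv x). split; [|split].
    + intro E. apply HT. apply (Tor_of hL x 2). lia.
      replace 2 with (1 + 1) by lia. rewrite zp_add, zp_1 by auto. rewrite <- E at 2. apply inv_r.
    + apply twinB_I; auto.
    + intros t T. apply twinB_I in T; auto.
  - apply NA_I; unfold SB; auto; lia.
Qed.

Lemma PhiC_C_I {L : Loop} (hL : power_assoc L) (x : L) : ~ Tor x -> PhiC (powerN_adj L) x.
Proof.
  intros HT. split.
  - intros t T. apply twinC_I in T; auto.
  - apply NA_I; unfold SC; auto; lia.
Qed.

Lemma nb_RG_B {L : Loop} (hL : power_assoc L) (x : L) : ~ Tor x ->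
  forall z, (z = x \/ RG L x z) <-> (z = x \/ powerZpm_adj L x z).
Proof. intros HT z. rewrite RG_I by auto. tauto. Qed.

Lemma twin_RG_B {L : Loop} (hL : power_assoc L) (x y : L) : ~ Tor x ->
  (twin (RG L) x y <-> twin (powerZpm_adj L) x y).
Proof.
  intros HT. destruct (classic (Tor y)) as [Ty|Ty].
  - split; intros T; exfalso.
    + destruct (proj2 (T y) (or_introl eq_refl)) as [E|E]. subst; auto.
      apply (RG_I_step hL x y HT E); auto.
    + destruct (proj2 (T y) (or_introl eq_refl)) as [E|E]. subst; auto.
      apply (B_I hL x y HT E); auto.
  - split; intros T z; specialize (T z); rewrite !nb_RG_B in * by auto; auto.
Qed.

Lemma PhiB_RG_I {L : Loop} (hL : power_assoc L) (x : L) : ~ Tor x -> PhiB (RG L) x.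
Proof.
  intros HT. destruct (PhiB_B_I hL x HT) as [[t [Ht [T U]]] [s [u [H1 [H2 [H3 H4]]]]]]. split.
  - exists t. split; auto. split. apply twin_RG_B; auto.
    intros t' T'. apply twin_RG_B in T'; auto.
  - exists s, u. rewrite !RG_I by (auto; eapply B_I; eauto). auto.
Qed.

Lemma Psi_B_I {L : Loop} (hL : power_assoc L) (x : L) : ~ Tor x -> Psi (powerZpm_adj L) PhiB x.
Proof. intros HT w Hw. apply PhiB_B_I; auto. induction Hw; auto. eapply B_I; eauto. Qed.
Lemma Psi_C_I {L : Loop} (hL : power_assoc L) (x : L) : ~ Tor x -> Psi (powerN_adj L) PhiC x.
Proof. intros HT w Hw. apply PhiC_C_I; auto. induction Hw; auto. eapply C_I; eauto. Qed.
Lemma Psi_RG_I {L : Loop} (hL : power_assoc L) (x : L) : ~ Tor x -> Psi (RG L) PhiB x.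
Proof. intros HT w Hw. apply PhiB_RG_I; auto. induction Hw; auto. eapply RG_I_step; eauto. Qed.


Lemma zp_2 {L : Loop} (hL : power_assoc L) (x : L) : zp x 2 = lmul x x.
Proof. replace 2 with (1 + 1) by lia. rewrite zp_add, zp_1 by auto. auto. Qed.

Lemma sq_inv {L : Loop} (hL : power_assoc L) (x : L) : zp x 2 = lone -> inv x = x.
Proof. intro H. rewrite zp_2 in H by auto. symmetry. apply inv_unique. auto. Qed.

Lemma inv_sq {L : Loop} (hL : power_assoc L) (x : L) : inv x = x -> zp x 2 = lone.
Proof. intro H. rewrite zp_2 by auto. rewrite <- H at 2. apply inv_r. Qed.

Lemma sq_self {L : Loop} (hL : power_assoc L) (x : L) : zp x 2 = x -> x = lone.
Proof. intro H. rewrite zp_2 in H by auto. apply (lcancel _ _ x). rewrite H, mul_one. auto. Qed.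

Lemma inv_ne_one {L : Loop} (hL : power_assoc L) (x : L) : x <> lone -> inv x <> lone.
Proof. intros H E. apply H. rewrite <- (inv_inv hL x), E. apply inv_one. Qed.

Lemma pow2 {L : Loop} (hL : power_assoc L) (w : L) m : zp w 2 = lone -> zp w m = lone \/ zp w m = w.
Proof. intros H. rewrite (zp_mod hL w 2 m) by (auto; lia).
  pose proof (Z.mod_pos_bound m 2 ltac:(lia)).
  assert (m mod 2 = 0 \/ m mod 2 = 1) as [E|E] by lia; rewrite E; auto. right; apply zp_1. Qed.

Lemma pow3 {L : Loop} (hL : power_assoc L) (w : L) m : zp w 3 = lone ->
  zp w m = lone \/ zp w m = w \/ zp w m = zp w 2.
Proof. intros H. rewrite (zp_mod hL w 3 m) by (auto; lia).
  pose proof (Z.mod_pos_bound m 3 ltac:(lia)).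
  assert (m mod 3 = 0 \/ m mod 3 = 1 \/ m mod 3 = 2) as [E|[E|E]] by lia; rewrite E; auto.
  right; left; apply zp_1. Qed.

Lemma pow4 {L : Loop} (hL : power_assoc L) (w : L) m : zp w 4 = lone ->
  zp w m = lone \/ zp w m = w \/ zp w m = zp w 2 \/ zp w m = zp w 3.
Proof. intros H. rewrite (zp_mod hL w 4 m) by (auto; lia).
  pose proof (Z.mod_pos_bound m 4 ltac:(lia)).
  assert (m mod 4 = 0 \/ m mod 4 = 1 \/ m mod 4 = 2 \/ m mod 4 = 3) as [E|[E|[E|E]]] by lia;
  rewrite E; auto. right; left; apply zp_1. Qed.

Lemma last_inv {L : Loop} (hL : power_assoc L) (w : L) K : zp w K = lone -> zp w (K - 1) = inv w.
Proof. intros H. apply inv_unique. replace (K - 1) with (-1 + K) by lia.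
  rewrite zp_add, H, mul_one, zp_m1 by auto. apply inv_r. Qed.

Lemma three_twins {V} (R : V -> V -> Prop) v a b : a <> v -> b <> v -> a <> b ->
  twin R v a -> twin R v b -> ~ ET1 R v.
Proof. intros H1 H2 H3 T1 T2 [t [Ht [T U]]].
  destruct (U a T1); destruct (U b T2); congruence. Qed.

Lemma Tor_step_CN {L : Loop} (hL : power_assoc L) S (x y : L) :
  (forall n, S n -> n <> 0) -> Tor x -> CN S x y -> Tor y.
Proof. intros HS Tx [n [Sn [H|H]]]. subst; apply Tor_zp; auto.
  eapply Tor_root; eauto. Qed.

Lemma B_T_step {L : Loop} (hL : power_assoc L) (x y : L) : Tor x -> powerZpm_adj L x y -> Tor y.
Proof. intros T A. apply adjB in A; auto. destruct A. eapply Tor_step_CN; eauto. auto. Qed.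
Lemma C_T_step {L : Loop} (hL : power_assoc L) (x y : L) : Tor x -> powerN_adj L x y -> Tor y.
Proof. intros T A. apply adjC in A; auto. destruct A. eapply Tor_step_CN; eauto.
  intros n Hn; unfold SC in Hn; lia. Qed.

Lemma nbRG {L : Loop} (hL : power_assoc L) (x z : L) : x <> lone ->
  ((z = x \/ RG L x z) <-> CN SA x z /\ z <> lone).
Proof. intros Hx. unfold RG. rewrite adjA by auto. split.
  - intros [->|[[_ H] [_ H']]]; auto. split; auto. exists 1; split. exact I. left; symmetry; apply zp_1.
  - intros [H H']. destruct (classic (z = x)); auto.
Qed.

Lemma twinRG_pow {L : Loop} (hL : power_assoc L) (x y : L) a b : x <> lone -> y <> lone ->
  x = zp y a -> y = zp x b -> twin (RG L) x y.
Proof. intros Hx Hy E1 E2 z. rewrite !nbRG by auto.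
  split; intros [H H']; split; auto; eapply CN_transfer; eauto; try apply SA_mul; exact I. Qed.

Lemma twinRG_inv {L : Loop} (hL : power_assoc L) (x : L) : x <> lone -> twin (RG L) x (inv x).
Proof. intros Hx. apply (twinRG_pow hL x (inv x) (-1) (-1)); auto. apply inv_ne_one; auto.
  rewrite zp_m1, inv_inv by auto; auto. rewrite zp_m1; auto. Qed.

Lemma RG_iff {L : Loop} (hL : power_assoc L) (x z : L) :
  RG L x z <-> x <> z /\ CN SA x z /\ x <> lone /\ z <> lone.
Proof. unfold RG. rewrite adjA by auto. tauto. Qed.

Lemma W2 {L : Loop} (hL : power_assoc L) (w : L) : w <> lone -> zp w 2 = lone -> ~ ET1 (RG L) w.
Proof.
  intros Hw H2 [t [Ht [T U]]].
  assert (Rt : RG L w t).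
  { destruct (proj2 (T t) (or_introl eq_refl)) as [E|E]; auto. congruence. }
  apply RG_iff in Rt; auto. destruct Rt as [_ [[n [_ [E|E]]] [_ Ht1]]].
  - destruct (pow2 hL w n H2); congruence.
  - assert (Ht2 : zp t 2 <> lone) by (intro Q; destruct (pow2 hL t n Q); congruence).
    assert (T2 : twin (RG L) w (inv t)) by (eapply twin_trans; eauto; apply twinRG_inv; auto).
    destruct (U _ T2) as [F|F].
    + apply Ht. rewrite <- (inv_inv hL t), F. apply sq_inv; auto.
    + apply Ht2. apply inv_sq; auto.
Qed.

Lemma odd_twin {L : Loop} (hL : power_assoc L) (v : L) M : zp v (2 * M + 1) = lone ->
  v = zp (zp v 2) (M + 1).
Proof. intros H. rewrite zp_mul by auto. replace (2 * (M + 1)) with ((2 * M + 1) + 1) by lia.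
  rewrite zp_add, H, one_mul, zp_1 by auto. auto. Qed.

Lemma RG1 {L : Loop} (hL : power_assoc L) (s : L) : s <> lone -> Tor s ->
  (exists w, reach (RG L) s w /\ ~ PhiB (RG L) w) \/ zp s 3 = lone.
Proof.
  intros Hs Ts. destruct (min_exp s Ts) as [K [HK [HKe Hmin]]].
  destruct (Z.Even_or_Odd K) as [[M HM]|[M HM]]; subst K.
  - left. exists (zp s M). split.
    + destruct (classic (zp s M = s)) as [E|E]. rewrite E; constructor.
      apply reach1. apply RG_iff; auto. split; auto. split. exists M; split; [exact I|left; auto].
      split; auto. apply Hmin; lia.
    + intros [E _]. revert E. apply W2; auto. apply Hmin; lia.
      rewrite zp_mul by auto. rewrite Z.mul_comm. auto.
  - destruct (Z.eq_dec M 0). subst. exfalso. apply Hs. rewrite <- (zp_1 s). auto.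
    destruct (classic (zp s 3 = lone)) as [E|E]; auto. left. exists s. split. constructor.
    intros [ET _]. revert ET.
    assert (H2 : zp s 2 <> lone) by (apply Hmin; lia).
    apply (three_twins _ _ (inv s) (zp s 2)).
    + intro F. apply H2, inv_sq; auto.
    + intro F. apply Hs, sq_self; auto.
    + intro F. apply E. replace 3 with (1 + 2) by lia. rewrite zp_add, zp_1, <- F by auto. apply inv_r.
    + apply twinRG_inv; auto.
    + apply (twinRG_pow hL s (zp s 2) (M + 1) 2); auto. apply odd_twin; auto.
Qed.

Lemma RG_T {L : Loop} (hL : power_assoc L) (v : L) : Tor v ->
  exists w, reach (RG L) v w /\ ~ PhiB (RG L) w.
Proof.
  intros Tv. destruct (classic (v = lone)) as [->|Hv].
  { exists lone. split. constructor. intros [_ [s [t [H _]]]]. destruct H as [_ [H _]]. auto. }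
  destruct (RG1 hL v Hv Tv) as [Hw|H3]; auto.
  destruct (classic (PhiB (RG L) v)) as [[ET [s [t [Rs [Rt [Hst Hn]]]]]]|NP];
    [|exists v; split; [constructor|auto]].
  assert (Hinv : zp v 2 = inv v).
  { apply inv_unique. replace 3 with (1 + 2) in H3 by lia. rewrite zp_add, zp_1 in H3 by auto. auto. }
  assert (Hsi : s <> inv v).
  { intro E. subst s. assert (T := twinRG_inv hL v Hv).
    destruct (proj1 (T t) (or_intror Rt)) as [F|F]; auto. }
  pose proof Rs as Rs'. apply RG_iff in Rs'; auto. destruct Rs' as [Hvs [[n [_ [E|E]]] [_ Hs]]].
  - exfalso. destruct (pow3 hL v n H3) as [F|[F|F]]; congruence.
  - assert (Hn0 : n <> 0) by (intro; subst; apply Hv; auto).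
    assert (Ts : Tor s) by (eapply Tor_root; eauto).
    destruct (RG1 hL s Hs Ts) as [[w [Hw1 Hw2]]|Hs3].
    + exists w. split; auto. eapply reach_trans; eauto. apply reach1; auto.
    + exfalso. destruct (pow3 hL s n Hs3) as [F|[F|F]]; try congruence.
      apply Hsi. rewrite <- Hinv, E, F, zp_mul by auto.
      rewrite (zp_mod hL s 3 (2*2)) by (auto; lia). simpl. symmetry. apply zp_1.
Qed.

Lemma Be {L : Loop} (hL : power_assoc L) (z : L) : (z = lone \/ powerZpm_adj L lone z) <-> Tor z.
Proof. rewrite adjB by auto. split.
  - intros [->|[Hz [n [Sn [E|E]]]]]. apply Tor_one. rewrite zp_one in E by auto. congruence.
    eapply Tor_of; eauto.
  - intros [k [Hk E]]. destruct (classic (z = lone)); auto. right. split; auto.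
    exists k. split. unfold SB; lia. right; auto.
Qed.

Lemma odd_kill {L : Loop} (hL : power_assoc L) (y d : L) M n : zp y (2 * M + 1) = lone ->
  d = zp y n -> zp d 2 = lone -> d = lone.
Proof. intros H Hd Hd2. rewrite Hd in Hd2. rewrite zp_mul in Hd2 by auto.
  rewrite Hd. replace n with ((n * 2) * (M + 1) + (2 * M + 1) * (- n)) at 1 by lia.
  rewrite zp_add, <- zp_mul, Hd2, zp_one, zp_e_mul by auto. apply one_mul. Qed.

Lemma twinB_pow {L : Loop} (hL : power_assoc L) (x y : L) a b : x = zp y a -> y = zp x b ->
  a <> 0 -> b <> 0 -> twin (powerZpm_adj L) x y.
Proof. intros. apply (twin_pow hL SB) with (a:=a) (b:=b); unfold SB; auto; try lia; apply SB_mul. Qed.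

Lemma twinB_inv {L : Loop} (hL : power_assoc L) (x : L) : twin (powerZpm_adj L) x (inv x).
Proof. apply (twinB_pow hL x (inv x) (-1) (-1)); try lia.
  rewrite zp_m1, inv_inv by auto; auto. rewrite zp_m1; auto. Qed.

Lemma KU {L : Loop} (hL : power_assoc L) (d : L) : d <> lone -> zp d 2 = lone ->
  (forall u, Tor u -> u <> lone -> u <> d -> exists n, d = zp u n) ->
  forall u, Tor u -> u <> lone -> u <> d ->
   ~ ET1 (powerZpm_adj L) u \/ (zp u 4 = lone /\ zp u 2 = d).
Proof.
  intros Hd Hd2 dom u Tu Hu Hud. destruct (dom u Tu Hu Hud) as [n Hn].
  destruct (min_exp u Tu) as [K [HK [HKe Hmin]]].
  destruct (Z.Even_or_Odd K) as [[M HM]|[M HM]]; subst K.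
  2:{ exfalso. apply Hd. eapply odd_kill; eauto. }
  assert (Hw : zp u M = d).
  { destruct (classic (zp u M = d)) as [E|E]; auto. exfalso.
    assert (Hw1 : zp u M <> lone) by (apply Hmin; lia).
    assert (Hw2 : zp (zp u M) 2 = lone) by (rewrite zp_mul by auto; rewrite Z.mul_comm; auto).
    destruct (dom (zp u M)) as [m Hm]; auto. apply Tor_zp; auto.
    destruct (pow2 hL _ m Hw2); congruence. }
  destruct (Z.eq_dec M 1). { subst. exfalso. apply Hud. rewrite <- Hw. symmetry; apply zp_1. }
  destruct (Z.Even_or_Odd M) as [[P HP]|[P HP]]; subst M.
  - destruct (Z.eq_dec P 1).
    + subst. right. split; auto.
    + left. apply (three_twins _ _ (inv u) (zp u (2 * P + 1))).
      * intro F. apply (Hmin 2). lia. apply inv_sq; auto.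
      * intro F. apply (Hmin (2 * P)). lia. apply (lcancel _ _ u). rewrite mul_one, <- zp_succ by auto.
        replace (Z.succ (2 * P)) with (2 * P + 1) by lia. exact F.
      * intro F. apply (Hmin (2 * P + 2)). lia.
        replace (2 * P + 2) with (Z.succ (2 * P + 1)) by lia. rewrite zp_succ, <- F by auto. apply inv_r.
      * apply twinB_inv; auto.
      * apply (twinB_pow hL u (zp u (2 * P + 1)) (2 * P + 1) (2 * P + 1)); auto; try lia.
        rewrite zp_mul by auto. replace ((2 * P + 1) * (2 * P + 1)) with (2 * (2 * P) * (P + 1) + 1) by lia.
        rewrite zp_add, zp_e_mul, one_mul, zp_1 by auto. auto.
  - exfalso. destruct (Z.eq_dec P 0). subst; lia.
    assert (H2 : zp u 2 <> lone) by (apply Hmin; lia).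
    assert (H2d : zp u 2 <> d).
    { intro F. apply (Hmin 4). lia. replace 4 with (2 * 2) by lia. rewrite <- zp_mul, F by auto. auto. }
    destruct (dom (zp u 2)) as [m Hm]; auto. apply Tor_zp; auto.
    apply Hd. apply (odd_kill hL (zp u 2) d P m); auto.
    rewrite zp_mul by auto. replace (2 * (2 * P + 1)) with (2 * (2 * P + 1)) by lia. auto.
Qed.

Lemma B_sym {L : Loop} (x y : L) : powerZpm_adj L x y -> powerZpm_adj L y x.
Proof. apply adj_sym. Qed.

Lemma Be' {L : Loop} (hL : power_assoc L) (z : L) : z <> lone -> Tor z -> powerZpm_adj L lone z.
Proof. intros H T. apply Be in T; auto. destruct T; congruence. Qed.

Lemma B_T {L : Loop} (hL : power_assoc L) (v : L) : Tor v ->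
  exists w, reach (powerZpm_adj L) v w /\ ~ PhiB (powerZpm_adj L) w.
Proof.
  intros Tv.
  assert (Rv : reach (powerZpm_adj L) v lone).
  { destruct (classic (v = lone)) as [->|Hv]. constructor. apply reach1, B_sym, Be'; auto. }
  cut (exists w, reach (powerZpm_adj L) lone w /\ ~ PhiB (powerZpm_adj L) w).
  { intros [w [H1 H2]]. exists w. split; auto. eapply reach_trans; eauto. }
  clear v Tv Rv.
  destruct (classic (ET1 (powerZpm_adj L) lone)) as [[d [Hd [T U]]]|NE];
    [|exists lone; split; [constructor|intros [E _]; auto]].
  assert (Td : Tor d) by (apply (Be hL); apply (proj2 (T d)); auto).
  assert (Hd2 : zp d 2 = lone).
  { assert (T2 : twin (powerZpm_adj L) lone (inv d)) by (eapply twin_trans; eauto; apply twinB_inv; auto).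
    destruct (U _ T2) as [F|F]. exfalso. apply Hd. rewrite <- (inv_inv hL d), F. apply inv_one.
    apply inv_sq; auto. }
  assert (domB : forall u, Tor u -> u <> d -> powerZpm_adj L d u).
  { intros u Tu Hu. apply Be in Tu; auto. apply (T u) in Tu. destruct Tu; congruence. }
  assert (dom : forall u, Tor u -> u <> lone -> u <> d -> exists n, d = zp u n).
  { intros u Tu Hu Hud. pose proof (domB u Tu Hud) as A. apply adjB in A; auto.
    destruct A as [_ [n [_ [E|E]]]]. exfalso. destruct (pow2 hL d n Hd2); congruence. eauto. }
  assert (Red : reach (powerZpm_adj L) lone d) by (apply reach1, Be'; auto).
  destruct (classic (NA (powerZpm_adj L) d)) as [[s [t [Rs [Rt [Hst Hn]]]]]|NN];
    [|exists d; split; auto; intros [_ E]; auto].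
  assert (Ts : Tor s) by (eapply (B_T_step hL d); eauto).
  assert (Tt : Tor t) by (eapply (B_T_step hL d); eauto).
  assert (Hs : s <> lone).
  { intro; subst. apply Hn. apply Be'; auto. }
  assert (Hsd : s <> d) by (intro; subst; apply (adj_irr _ _ Rs)).
  assert (Res : reach (powerZpm_adj L) lone s) by (apply reach1, Be'; auto).
  destruct (KU hL d Hd Hd2 dom s Ts Hs Hsd) as [NE|[Hs4 Hs2]].
  { exists s. split; auto. intros [E _]; auto. }
  destruct (classic (NA (powerZpm_adj L) s)) as [[r [t' [Rr [Rt' [Hrt Hn']]]]]|NN];
    [|exists s; split; auto; intros [_ E]; auto].
  assert (Tr : Tor r) by (eapply (B_T_step hL s); eauto).
  assert (Tt' : Tor t') by (eapply (B_T_step hL s); eauto).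
  assert (Hr : r <> lone) by (intro; subst; apply Hn'; apply Be'; auto).
  assert (Hrd : r <> d) by (intro; subst; apply Hn'; apply domB; auto).
  assert (Hri : r <> inv s).
  { intro E. subst r. destruct (proj1 (twinB_inv hL s t') (or_intror Rt')) as [F|F]; auto. }
  assert (Hrs : r <> s) by (intro; subst; apply (adj_irr _ _ Rr)).
  assert (Hs3 : zp s 3 = inv s).
  { apply inv_unique. rewrite <- (zp_1 s) at 1. rewrite <- zp_add by auto. auto. }
  destruct (KU hL d Hd Hd2 dom r Tr Hr Hrd) as [NE|[Hr4 Hr2]].
  { exists r. split. eapply reach_trans; eauto. apply reach1; auto. intros [E _]; auto. }
  exfalso. pose proof Rr as A. apply adjB in A; auto. destruct A as [_ [n [_ [E|E]]]].
  - destruct (pow4 hL s n Hs4) as [F|[F|[F|F]]]; congruence.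
  - destruct (pow4 hL r n Hr4) as [F|[F|[F|F]]]; try congruence.
    apply Hri. rewrite <- Hs3, E, F, zp_mul by auto.
    rewrite (zp_mod hL r 4 (3 * 3)) by (auto; lia). simpl. symmetry; apply zp_1.
Qed.

Lemma Ce {L : Loop} (hL : power_assoc L) (z : L) : z <> lone -> Tor z -> powerN_adj L lone z.
Proof. intros Hz [k [Hk E]]. apply adjC; auto. split; auto. exists k. split. unfold SC; lia. right; auto. Qed.

Lemma C_sym {L : Loop} (x y : L) : powerN_adj L x y -> powerN_adj L y x.
Proof. apply adj_sym. Qed.

Lemma twinC_inv_T {L : Loop} (hL : power_assoc L) (x : L) : Tor x -> x <> lone ->
  twin (powerN_adj L) x (inv x).
Proof. intros Tx Hx. destruct (min_exp x Tx) as [K [HK [HKe Hmin]]].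
  assert (K <> 1) by (intro; subst; apply Hx; rewrite <- (zp_1 x); auto).
  apply (twin_pow hL SC) with (a := K - 1) (b := K - 1); unfold SC; try lia; try apply SC_mul.
  - rewrite zp_inv by auto. replace (- (K - 1)) with (1 + K * (-1)) by lia.
    rewrite zp_add, zp_e_mul, mul_one, zp_1 by auto. auto.
  - symmetry. apply last_inv; auto.
Qed.

Lemma C_T {L : Loop} (hL : power_assoc L) (v : L) : Tor v ->
  exists w, reach (powerN_adj L) v w /\ ~ PhiC (powerN_adj L) w.
Proof.
  intros Tv.
  assert (Rv : reach (powerN_adj L) v lone).
  { destruct (classic (v = lone)) as [->|Hv]. constructor. apply reach1, C_sym, Ce; auto. }
  cut (exists w, reach (powerN_adj L) lone w /\ ~ PhiC (powerN_adj L) w).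
  { intros [w [H1 H2]]. exists w. split; auto. eapply reach_trans; eauto. }
  clear v Tv Rv.
  assert (SQ : forall s, reach (powerN_adj L) lone s -> Tor s -> s <> lone -> zp s 2 <> lone ->
     exists w, reach (powerN_adj L) lone w /\ ~ PhiC (powerN_adj L) w).
  { intros s Rs Ts Hs H2. exists s. split; auto. intros [N _].
    assert (E := N _ (twinC_inv_T hL s Ts Hs)). apply H2, inv_sq; auto. }
  destruct (classic (NA (powerN_adj L) lone)) as [[s [t [Rs [Rt [Hst Hn]]]]]|NN];
    [|exists lone; split; [constructor|intros [_ E]; auto]].
  assert (Ts : Tor s) by (apply (C_T_step hL lone); auto; apply Tor_one).
  assert (Hs : s <> lone) by (intro; subst; apply (adj_irr _ _ Rs)).
  destruct (classic (zp s 2 = lone)) as [Hs2|Hs2]; [|apply (SQ s); auto; apply reach1; auto].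
  destruct (classic (NA (powerN_adj L) s)) as [[a [b [Ra [Rb [Hab Hn']]]]]|NN];
    [|exists s; split; [apply reach1; auto|intros [_ E]; auto]].
  assert (Ta : Tor a) by (apply (C_T_step hL s); auto).
  assert (Tb : Tor b) by (apply (C_T_step hL s); auto).
  assert (Key : forall c, powerN_adj L s c -> Tor c -> zp c 2 = lone -> c = lone).
  { intros c Rc Tc Hc2. pose proof Rc as A. apply adjC in A; auto. destruct A as [Hsc [n [_ [E|E]]]].
    - destruct (pow2 hL s n Hs2); congruence.
    - destruct (pow2 hL c n Hc2); congruence. }
  assert (Ha : a <> lone -> zp a 2 = lone -> False) by (intros; apply H; apply Key; auto).
  assert (Hb : b <> lone -> zp b 2 = lone -> False) by (intros; apply H; apply Key; auto).
  destruct (classic (a = lone)) as [Ea|Ea].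
  - destruct (classic (b = lone)) as [Eb|Eb]. congruence.
    apply (SQ b); [eapply reach_trans; [apply reach1; exact Rs| apply reach1; exact Rb] | exact Tb | exact Eb | intro; apply Hb; auto].
  - apply (SQ a); [eapply reach_trans; [apply reach1; exact Rs| apply reach1; exact Ra] | exact Ta | exact Ea | intro; apply Ha; auto].
Qed.

Lemma Psi_B_iff {L : Loop} (hL : power_assoc L) (x : L) : Psi (powerZpm_adj L) PhiB x <-> ~ Tor x.
Proof. split. intros P T. destruct (B_T hL x T) as [w [H1 H2]]. apply H2, P; auto.
  apply Psi_B_I; auto. Qed.
Lemma Psi_C_iff {L : Loop} (hL : power_assoc L) (x : L) : Psi (powerN_adj L) PhiC x <-> ~ Tor x.
Proof. split. intros P T. destruct (C_T hL x T) as [w [H1 H2]]. apply H2, P; auto.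
  apply Psi_C_I; auto. Qed.
Lemma Psi_RG_iff {L : Loop} (hL : power_assoc L) (x : L) : Psi (RG L) PhiB x <-> ~ Tor x.
Proof. split. intros P T. destruct (RG_T hL x T) as [w [H1 H2]]. apply H2, P; auto.
  apply Psi_RG_I; auto. Qed.


Lemma B_e {L : Loop} (hL : power_assoc L) (x : L) : powerZpm_adj L lone x -> Tor x.
Proof. intro H. apply (Be hL x). auto. Qed.

Lemma F1' {L : Loop} (hL : power_assoc L) (x y : L) :
  powerZpm_adj L x y <-> power_adj L x y /\ (x = lone -> Tor y) /\ (y = lone -> Tor x).
Proof. split.
  - intros H. split; [|split].
    + apply adjA; auto. apply adjB in H; auto. destruct H as [H [n [_ E]]]. split; auto. exists n; split; auto. exact I.
    + intros ->. apply B_e; auto.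
    + intros ->. apply B_e; auto. apply adj_sym; auto.
  - intros [H [H1 H2]]. pose proof H as H'. apply adjA in H'; auto. destruct H' as [Hxy [n [_ E]]].
    destruct (Z.eq_dec n 0).
    + subst n. simpl in E. destruct E as [E|E].
      * subst y. apply adj_sym. apply Be'; auto.
      * subst x. apply Be'; auto.
    + apply adjB; auto. split; auto. exists n; split; auto.
Qed.

Lemma F1 {L : Loop} (hL : power_assoc L) (x y : L) :
  power_adj L x y <-> powerZpm_adj L x y \/ (x <> y /\ (x = lone \/ y = lone)).
Proof. split.
  - intros H. destruct (classic (powerZpm_adj L x y)); auto. right.
    pose proof H as H'. apply adjA in H'; auto. destruct H' as [Hxy _]. split; auto.
    destruct (classic (x = lone)); auto. destruct (classic (y = lone)); auto. exfalso. apply H0.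
    apply F1'; auto. split; auto. split; intro; contradiction.
  - intros [H|[Hxy [->| ->]]].
    + apply F1' in H; auto. tauto.
    + apply adjA; auto. split; auto. exists 0. split. exact I. right. reflexivity.
    + apply adjA; auto. split; auto. exists 0. split. exact I. left. reflexivity.
Qed.

Definition TorPres {G H : Loop} (f : G -> H) := forall x, Tor x <-> Tor (f x).

Lemma iso_BA {G H : Loop} (hG : power_assoc G) (hH : power_assoc H) (f : G -> H) g :
  isoF (powerZpm_adj G) (powerZpm_adj H) f g -> f lone = lone -> TorPres f ->
  isoF (power_adj G) (power_adj H) f g.
Proof. intros [K1 [K2 K3]] He TP. unfold TorPres in TP. split; auto. split; auto. intros a b.
  rewrite !F1 by auto. rewrite K3. assert (Inj : forall a b, f a = f b -> a = b)
    by (intros u v E; rewrite <- (K1 u), <- (K1 v), E; auto).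
  assert (Ee : forall a, f a = lone <-> a = lone) by (intros u; split; intro E; [apply Inj; congruence|subst; auto]).
  assert (NE : a <> b <-> f a <> f b) by (split; intros Q E; apply Q; [apply Inj|subst]; auto).
  rewrite !Ee. tauto.
Qed.

Lemma iso_AB {G H : Loop} (hG : power_assoc G) (hH : power_assoc H) (f : G -> H) g :
  isoF (power_adj G) (power_adj H) f g -> f lone = lone -> TorPres f ->
  isoF (powerZpm_adj G) (powerZpm_adj H) f g.
Proof. intros [K1 [K2 K3]] He TP. unfold TorPres in TP. split; auto. split; auto. intros a b.
  rewrite !F1' by auto. rewrite K3. assert (Inj : forall a b, f a = f b -> a = b)
    by (intros u v E; rewrite <- (K1 u), <- (K1 v), E; auto).
  assert (Ee : forall a, f a = lone <-> a = lone) by (intros u; split; intro E; [apply Inj; congruence|subst; auto]).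
  rewrite !Ee, <- !TP. tauto.
Qed.

Lemma TorPres_of_Psi {G H : Loop} (RG0 : G -> G -> Prop) (RH : H -> H -> Prop)
  (P : forall V : Type, (V -> V -> Prop) -> V -> Prop) f g
  (I : isoF RG0 RH f g)
  (PG : forall x, Psi RG0 (P _) x <-> ~ Tor x) (PH : forall x, Psi RH (P _) x <-> ~ Tor x)
  (inv1 : forall x, Psi RG0 (P _) x -> Psi RH (P _) (f x))
  (inv2 : forall y, Psi RH (P _) y -> Psi RG0 (P _) (g y)) : TorPres f.
Proof. intros x. destruct I as [K1 _]. split; intros T.
  - apply NNPP. intro N. apply PH in N. apply inv2 in N. rewrite K1 in N. apply PG in N; auto.
  - apply NNPP. intro N. apply PG in N. apply inv1 in N. apply PH in N; auto.
Qed.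

Lemma TorPres_B {G H : Loop} (hG : power_assoc G) (hH : power_assoc H) f g :
  isoF (powerZpm_adj G) (powerZpm_adj H) f g -> TorPres f.
Proof. intros I. apply (TorPres_of_Psi _ _ (@PhiB) f g I).
  intro x; apply Psi_B_iff; auto. intro x; apply Psi_B_iff; auto.
  intros x Hx; apply (PsiB_iso _ _ _ _ I); auto. intros y Hy; apply (PsiB_iso _ _ _ _ (isoF_sym _ _ _ _ I)); auto. Qed.
Lemma TorPres_C {G H : Loop} (hG : power_assoc G) (hH : power_assoc H) f g :
  isoF (powerN_adj G) (powerN_adj H) f g -> TorPres f.
Proof. intros I. apply (TorPres_of_Psi _ _ (@PhiC) f g I).
  intro x; apply Psi_C_iff; auto. intro x; apply Psi_C_iff; auto.
  intros x Hx; apply (PsiC_iso _ _ _ _ I); auto. intros y Hy; apply (PsiC_iso _ _ _ _ (isoF_sym _ _ _ _ I)); auto. Qed.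
Lemma TorPres_RG {G H : Loop} (hG : power_assoc G) (hH : power_assoc H) f g :
  isoF (RG G) (RG H) f g -> TorPres f.
Proof. intros I. apply (TorPres_of_Psi _ _ (@PhiB) f g I).
  intro x; apply Psi_RG_iff; auto. intro x; apply Psi_RG_iff; auto.
  intros x Hx; apply (PsiB_iso _ _ _ _ I); auto. intros y Hy; apply (PsiB_iso _ _ _ _ (isoF_sym _ _ _ _ I)); auto. Qed.

Lemma fix_one {G H : Loop} (R1 : G -> G -> Prop) (R2 : H -> H -> Prop) f g
  (R2sym : forall a b, R2 a b -> R2 b a) (R2irr : forall a, ~ R2 a a) :
  isoF R1 R2 f g -> twin R2 (f lone) lone ->
  exists f' g', isoF R1 R2 f' g' /\ f' lone = lone.
Proof. intros I T. exists (fun a => swap (f lone) lone (f a)), (fun b => g (swap (f lone) lone b)).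
  split. apply (isoF_comp _ R2 _ f g). auto. apply swap_iso; auto. apply swap_u. Qed.

Lemma AtoB {G H : Loop} (hG : power_assoc G) (hH : power_assoc H) :
  graph_iso (power_adj G) (power_adj H) -> graph_iso (powerZpm_adj G) (powerZpm_adj H).
Proof.
  intros [f [g I]].
  assert (T : twin (power_adj H) (f lone) lone).
  { intros z. destruct (iso_ex _ _ _ _ I z) as [a ->]. rewrite (nb_iso _ _ _ _ I).
    assert (D : forall (L : Loop) (hL : power_assoc L) (u : L), u = lone \/ power_adj L lone u).
    { intros L hL u. destruct (classic (u = lone)); auto. right. apply adjA; auto. split; auto.
      exists 0. split. exact Logic.I. right; reflexivity. }
    split; intros _; [apply D|]; auto. }
  destruct (fix_one _ _ f g (@adj_sym H _) (@adj_irr H _) I T) as [f' [g' [I' He]]].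
  exists f', g'. apply iso_AB; auto.
  apply (TorPres_RG hG hH f' g'). destruct I' as [K1 [K2 K3]]. split; auto. split; auto.
  intros a b. unfold RG. rewrite K3.
  assert (Ee : forall a, f' a = lone <-> a = lone).
  { intros u; split; intro E. rewrite <- (K1 u), E, <- He, K1; auto. subst; auto. }
  rewrite !Ee. tauto.
Qed.

Lemma BtoA {G H : Loop} (hG : power_assoc G) (hH : power_assoc H) :
  graph_iso (powerZpm_adj G) (powerZpm_adj H) -> graph_iso (power_adj G) (power_adj H).
Proof.
  intros [f [g I]]. assert (TP := TorPres_B hG hH f g I).
  assert (T : twin (powerZpm_adj H) (f lone) lone).
  { intros z. destruct (iso_ex _ _ _ _ I z) as [a ->]. rewrite (nb_iso _ _ _ _ I).
    rewrite !Be by auto. apply (TP a). }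
  destruct (fix_one _ _ f g (@adj_sym H _) (@adj_irr H _) I T) as [f' [g' [I' He]]].
  exists f', g'. apply iso_BA; auto. apply (TorPres_B hG hH f' g' I').
Qed.


Definition eqv {L : Loop} (x y : L) := exists a b, 0 < a /\ 0 < b /\ zp x a = zp y b.
Definition eqv' {L : Loop} (x y : L) := exists a b, a <> 0 /\ b <> 0 /\ zp x a = zp y b.

Lemma eqv_refl {L : Loop} (x : L) : eqv x x.
Proof. exists 1, 1. repeat split; lia. Qed.
Lemma eqv_sym {L : Loop} (x y : L) : eqv x y -> eqv y x.
Proof. intros [a [b [H1 [H2 E]]]]. exists b, a. auto. Qed.
Lemma eqv_trans {L : Loop} (hL : power_assoc L) (x y z : L) : eqv x y -> eqv y z -> eqv x z.
Proof. intros [a [b [H1 [H2 E]]]] [c [d [H3 [H4 F]]]]. exists (a * c), (d * b).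
  split; [lia|split; [lia|]]. rewrite <- zp_mul, E, zp_mul by auto.
  replace (b * c) with (c * b) by lia. rewrite <- zp_mul, F, zp_mul by auto. reflexivity. Qed.
Lemma eqv'_refl {L : Loop} (x : L) : eqv' x x.
Proof. exists 1, 1. repeat split; lia. Qed.
Lemma eqv'_sym {L : Loop} (x y : L) : eqv' x y -> eqv' y x.
Proof. intros [a [b [H1 [H2 E]]]]. exists b, a. auto. Qed.
Lemma eqv'_trans {L : Loop} (hL : power_assoc L) (x y z : L) : eqv' x y -> eqv' y z -> eqv' x z.
Proof. intros [a [b [H1 [H2 E]]]] [c [d [H3 [H4 F]]]]. exists (a * c), (d * b).
  split; [lia|split; [lia|]]. rewrite <- zp_mul, E, zp_mul by auto.
  replace (b * c) with (c * b) by lia. rewrite <- zp_mul, F, zp_mul by auto. reflexivity. Qed.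
Lemma eqv_eqv' {L : Loop} (x y : L) : eqv x y -> eqv' x y.
Proof. intros [a [b [H1 [H2 E]]]]. exists a, b. repeat split; auto; lia. Qed.
Lemma eqv_inv {L : Loop} (hL : power_assoc L) (x y : L) : eqv x y -> eqv (inv x) (inv y).
Proof. intros [a [b [H1 [H2 E]]]]. exists a, b. repeat split; auto. rewrite !zp_inv, !zp_opp, E by auto. auto. Qed.
Lemma eqv'_inv {L : Loop} (hL : power_assoc L) (x : L) : eqv' x (inv x).
Proof. exists 1, (-1). repeat split; try lia. rewrite zp_inv by auto. reflexivity. Qed.

Lemma eqv'_split {L : Loop} (hL : power_assoc L) (u v : L) : eqv' u v -> eqv u v \/ eqv u (inv v).
Proof. intros [a [b [H1 [H2 E]]]].
  assert (E' : zp u (- a) = zp v (- b)) by (rewrite !zp_opp, E by auto; auto).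
  destruct (Z_lt_le_dec 0 a); destruct (Z_lt_le_dec 0 b).
  - left. exists a, b. auto.
  - right. exists a, (- b). repeat split; try lia. rewrite zp_inv by auto. rewrite Z.opp_involutive. auto.
  - right. exists (- a), b. repeat split; try lia. rewrite zp_inv by auto. auto.
  - left. exists (- a), (- b). repeat split; try lia. auto.
Qed.

Lemma not_eqv_inv {L : Loop} (hL : power_assoc L) (u : L) : ~ Tor u -> ~ eqv u (inv u).
Proof. intros HT [a [b [H1 [H2 E]]]]. rewrite zp_inv in E by auto. apply notTor_inj in E; auto. lia. Qed.

Lemma eqv'_nT {L : Loop} (hL : power_assoc L) (u v : L) : eqv' u v -> ~ Tor v -> ~ Tor u.
Proof. intros [a [b [H1 [H2 E]]]] HT Tu. apply HT. apply (Tor_root hL (zp v b) v b); auto.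
  rewrite <- E. apply Tor_zp; auto. Qed.

Lemma adj_inv {L : Loop} (hL : power_assoc L) S (u v : L) :
  pgraph_adj S L u v <-> pgraph_adj S L (inv u) (inv v).
Proof. rewrite !adj_iff by auto.
  assert (K : forall a b : L, CN S a b -> CN S (inv a) (inv b)).
  { intros a b [n [Sn [E|E]]]; exists n; split; auto; [left|right]; rewrite E, zp_inv, zp_opp by auto; auto. }
  split; intros [H1 H2]; split.
  - intro E. apply H1. rewrite <- (inv_inv hL u), E, inv_inv; auto.
  - auto.
  - intro E. subst. auto.
  - apply K in H2. rewrite !inv_inv in H2; auto.
Qed.

Lemma C_iff_I {L : Loop} (hL : power_assoc L) (u v : L) : ~ Tor u -> ~ Tor v ->
  (powerN_adj L u v <-> powerZpm_adj L u v /\ eqv u v).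
Proof. intros Tu Tv. rewrite adjC, adjB by auto. split.
  - intros [H [n [Sn [E|E]]]]; unfold SC in Sn; split; try split; auto; try (exists n; split; [unfold SB; lia|auto]).
    exists n, 1. repeat split; try lia. rewrite zp_1; auto.
    exists 1, n. repeat split; try lia. rewrite zp_1; auto.
  - intros [[H [n [Sn [E|E]]]] [a [b [Ha [Hb F]]]]]; split; auto; exists n; split; auto; unfold SC; unfold SB in Sn.
    + subst. rewrite zp_mul in F by auto. apply notTor_inj in F; auto. nia.
    + subst. rewrite zp_mul in F by auto. apply notTor_inj in F; auto. nia.
Qed.

Lemma C_eqv {L : Loop} (hL : power_assoc L) (u v : L) : powerN_adj L u v -> eqv u v.
Proof. intros H. apply adjC in H; auto. destruct H as [_ [n [Sn [E|E]]]]; unfold SC in Sn.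
  exists n, 1. repeat split; try lia. rewrite zp_1; auto.
  exists 1, n. repeat split; try lia. rewrite zp_1; auto. Qed.

Lemma B_twin_repl {L : Loop} (hL : power_assoc L) (u v : L) : u <> v -> u <> inv v ->
  (powerZpm_adj L u v <-> powerZpm_adj L u (inv v)).
Proof. intros H1 H2. split; intro H; apply adj_sym; apply adj_sym in H;
  [rewrite <- (twin_other _ v (inv v) u)|rewrite (twin_other _ v (inv v) u)]; auto; apply twinB_inv; auto. Qed.

Lemma inv_nT {L : Loop} (hL : power_assoc L) (x : L) : ~ Tor x -> ~ Tor (inv x).
Proof. intros H T. apply H. rewrite <- (inv_inv hL x). apply Tor_inv; auto. Qed.

Lemma inv_ne {L : Loop} (hL : power_assoc L) (x : L) : ~ Tor x -> inv x <> x.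
Proof. intros H E. apply H. apply (Tor_of hL x 2). lia. apply inv_sq; auto. Qed.


Definition rep {L : Loop} (x : L) : L := epsilon (inhabits lone) (fun r => eqv' r x).
Definition sgn {L : Loop} (x : L) : Prop := eqv x (rep x).

Lemma rep_spec {L : Loop} (x : L) : eqv' (rep x) x.
Proof. unfold rep. apply epsilon_spec. exists x. apply eqv'_refl. Qed.

Lemma rep_eq {L : Loop} (hL : power_assoc L) (x y : L) : eqv' x y -> rep x = rep y.
Proof. intros H. unfold rep. f_equal. apply functional_extensionality. intro r.
  apply propositional_extensionality. split; intro K. eapply eqv'_trans; eauto.
  eapply eqv'_trans; eauto. apply eqv'_sym; auto. Qed.

Lemma sgn_inv {L : Loop} (hL : power_assoc L) (x : L) : ~ Tor x -> (sgn (inv x) <-> ~ sgn x).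
Proof. intros HT. unfold sgn. rewrite <- (rep_eq hL x (inv x)) by (apply eqv'_inv; auto).
  set (r := rep x). assert (Hr : eqv' r x) by apply rep_spec.
  split.
  - intros H1 H2. apply (not_eqv_inv hL x HT). eapply eqv_trans; eauto. apply eqv_sym; auto.
  - intros H. destruct (eqv'_split hL r x Hr) as [E|E].
    + exfalso. apply H. apply eqv_sym; auto.
    + apply eqv_sym; auto.
Qed.

Lemma sgn_B {L : Loop} (hL : power_assoc L) (u v : L) : ~ Tor u -> ~ Tor v ->
  powerZpm_adj L u v -> ((sgn u <-> sgn v) <-> eqv u v).
Proof. intros Tu Tv A.
  assert (E : eqv' u v).
  { apply adjB in A; auto. destruct A as [_ [n [Sn [F|F]]]]; unfold SB in Sn.
    exists n, 1. repeat split; try lia. rewrite zp_1; auto.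
    exists 1, n. repeat split; try lia. rewrite zp_1; auto. }
  unfold sgn. rewrite <- (rep_eq hL u v E). set (r := rep u).
  assert (Hr : eqv' r u) by apply rep_spec.
  assert (Hr' : eqv' r v) by (eapply eqv'_trans; eauto).
  split.
  - intros K. destruct (eqv'_split hL r u Hr) as [F|F].
    + apply eqv_sym in F. eapply eqv_trans; eauto. apply eqv_sym, K; auto.
    + destruct (eqv'_split hL r v Hr') as [G|G].
      * exfalso. apply eqv_sym in G. apply K in G. apply (not_eqv_inv hL u Tu).
        eapply eqv_trans; eauto.
      * apply eqv_inv in F; auto. apply eqv_inv in G; auto. rewrite inv_inv in F, G by auto.
        eapply (eqv_trans hL); [apply eqv_sym; exact F|exact G].
  - intros K. split; intro Q; eapply eqv_trans; eauto. apply eqv_sym; auto.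
Qed.

Lemma C_iff_sgn {L : Loop} (hL : power_assoc L) (u v : L) : ~ Tor u -> ~ Tor v ->
  (powerN_adj L u v <-> powerZpm_adj L u v /\ (sgn u <-> sgn v)).
Proof. intros Tu Tv. rewrite C_iff_I by auto. split; intros [A K]; split; auto;
  apply (sgn_B hL u v Tu Tv A); auto. Qed.

Lemma iso_inv {G H : Loop} (hG : power_assoc G) (hH : power_assoc H) f g :
  isoF (powerZpm_adj G) (powerZpm_adj H) f g -> forall x, ~ Tor x -> f (inv x) = inv (f x).
Proof. intros I x HT. assert (TP := TorPres_B hG hH f g I). unfold TorPres in TP.
  assert (T := proj1 (twin_iso _ _ _ _ I x (inv x)) (twinB_inv hG x)).
  apply twinB_I in T; auto. destruct T as [E|E]; auto. exfalso.
  apply (iso_inj _ _ _ _ I) in E. apply (inv_ne hG x); auto.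
  intro Q. apply HT, TP; auto. Qed.

Definition mk {G H : Loop} (f : G -> H) (x : G) : H :=
  if excluded_middle_informative (Tor x) then f x
  else if excluded_middle_informative (sgn (f x) <-> sgn x) then f x else inv (f x).

Lemma mk_T {G H : Loop} (f : G -> H) x : Tor x -> mk f x = f x.
Proof. intros T. unfold mk. destruct excluded_middle_informative; tauto. Qed.

Lemma mk_nT {G H : Loop} (hH : power_assoc H) (f : G -> H) x : ~ Tor x -> ~ Tor (f x) ->
  (mk f x = f x \/ mk f x = inv (f x)) /\ (sgn (mk f x) <-> sgn x).
Proof. intros T T'. unfold mk. destruct excluded_middle_informative; [tauto|].
  destruct excluded_middle_informative as [E|E]; split; auto.
  rewrite sgn_inv by auto. tauto. Qed.

Lemma mk_cond {G H : Loop} (f : G -> H) x : ~ Tor x ->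
  ((sgn (f x) <-> sgn x) -> mk f x = f x) /\ (~ (sgn (f x) <-> sgn x) -> mk f x = inv (f x)).
Proof. intros T. unfold mk. destruct excluded_middle_informative; [tauto|].
  destruct excluded_middle_informative as [E|E]; tauto. Qed.

Lemma mk_rt {G H : Loop} (hG : power_assoc G) (hH : power_assoc H) f g :
  isoF (powerZpm_adj G) (powerZpm_adj H) f g -> forall x, mk g (mk f x) = x.
Proof.
  intros I x. assert (TP := TorPres_B hG hH f g I). unfold TorPres in TP. pose proof I as [K1 [K2 K3]].
  assert (Ig := isoF_sym _ _ _ _ I).
  destruct (classic (Tor x)) as [Tx|Tx].
  - rewrite (mk_T f x Tx). rewrite (mk_T g (f x)) by (apply TP; auto). apply K1.
  - assert (Tfx : ~ Tor (f x)) by (intro Q; apply Tx, TP; auto).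
    destruct (mk_cond f x Tx) as [C1 C2]. destruct (classic (sgn (f x) <-> sgn x)) as [E|E].
    + rewrite C1 by auto. destruct (mk_cond g (f x) Tfx) as [D1 D2]. rewrite K1 in D1. rewrite D1; auto. tauto.
    + rewrite C2 by auto. assert (Ti : ~ Tor (inv (f x))) by (apply inv_nT; auto).
      destruct (mk_cond g _ Ti) as [D1 D2].
      rewrite (iso_inv hH hG g f Ig), K1 in D2 by auto. rewrite D2, inv_inv; auto.
      rewrite !sgn_inv by (auto; apply inv_nT; auto). tauto.
Qed.

Lemma mk_inv {G H : Loop} (hG : power_assoc G) (hH : power_assoc H) f g :
  isoF (powerZpm_adj G) (powerZpm_adj H) f g -> forall x, ~ Tor x -> mk f (inv x) = inv (mk f x).
Proof.
  intros I x Tx. assert (TP := TorPres_B hG hH f g I). unfold TorPres in TP.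
  assert (Tfx : ~ Tor (f x)) by (intro Q; apply Tx, TP; auto).
  assert (Ti : ~ Tor (inv x)) by (apply inv_nT; auto).
  destruct (mk_cond f x Tx) as [C1 C2]. destruct (mk_cond f _ Ti) as [D1 D2].
  rewrite (iso_inv hG hH f g I x Tx) in D1, D2.
  rewrite !(sgn_inv hH (f x)), !(sgn_inv hG x) in D1, D2 by auto.
  destruct (classic (sgn (f x) <-> sgn x)) as [E|E].
  - rewrite C1, D1 by tauto. auto.
  - rewrite C2, D2 by tauto. auto.
Qed.

Lemma F2 {L : Loop} (hL : power_assoc L) (x y : L) : Tor x ->
  (powerZpm_adj L x y <-> powerN_adj L x y).
Proof. intros Tx. rewrite adjB, adjC by auto. destruct (min_exp x Tx) as [K [HK [HKe _]]].
  split; intros [H [n [Sn E]]]; split; auto; unfold SB, SC in *.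
  - destruct (Z_lt_le_dec 0 n). exists n; auto.
    destruct E as [E|E].
    + exists (n + K * (1 - n)). split. nia. left. rewrite zp_add, zp_e_mul, mul_one by auto. auto.
    + assert (Ty : Tor y) by (eapply Tor_root; eauto).
      destruct (min_exp y Ty) as [K' [HK' [HKe' _]]].
      exists (n + K' * (1 - n)). split. nia. right. rewrite zp_add, zp_e_mul, mul_one by auto. auto.
  - exists n. split; auto. lia.
Qed.

Lemma mk_C_T {G H : Loop} (hG : power_assoc G) (hH : power_assoc H) f g :
  isoF (powerZpm_adj G) (powerZpm_adj H) f g ->
  (forall x, Tor x <-> Tor (mk f x)) ->
  forall x y, Tor x -> (powerN_adj G x y <-> powerN_adj H (mk f x) (mk f y)).
Proof. intros I TPm x y Tx. assert (TP := TorPres_B hG hH f g I). unfold TorPres in TP.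
  pose proof I as [K1 [K2 K3]].
  rewrite <- (F2 hG x y Tx). rewrite <- (F2 hH (mk f x) (mk f y)) by (apply TPm; auto).
  destruct (classic (Tor y)) as [Ty|Ty].
  - rewrite !mk_T by auto. apply K3.
  - split; intro A; exfalso. apply Ty. eapply (B_T_step hG); eauto.
    apply Ty, TPm. eapply (B_T_step hH); eauto. apply TPm; auto.
Qed.

Lemma BtoC {G H : Loop} (hG : power_assoc G) (hH : power_assoc H) :
  graph_iso (powerZpm_adj G) (powerZpm_adj H) -> graph_iso (powerN_adj G) (powerN_adj H).
Proof.
  intros [f [g I]]. assert (TP := TorPres_B hG hH f g I). unfold TorPres in TP.
  pose proof I as [K1 [K2 K3]].
  assert (Ig := isoF_sym _ _ _ _ I).
  exists (mk f), (mk g). split; [apply (mk_rt hG hH f g I)|split; [apply (mk_rt hH hG g f Ig)|]].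
  assert (TPm : forall x, Tor x <-> Tor (mk f x)).
  { intro x. destruct (classic (Tor x)). rewrite mk_T; auto.
    assert (Tfx : ~ Tor (f x)) by (intro Q; apply H0, TP; auto).
    destruct (mk_nT hH f x H0 Tfx) as [[E|E] _]; rewrite E. apply TP.
    split; intro Q; [tauto|]. exfalso. apply Tfx. rewrite <- (inv_inv hH (f x)). apply Tor_inv; auto. }
  intros x y.
  destruct (classic (Tor x)) as [Tx|Tx]. apply (mk_C_T hG hH f g I TPm); auto.
  destruct (classic (Tor y)) as [Ty|Ty].
  { split; intro A; apply adj_sym; apply adj_sym in A; revert A; apply (mk_C_T hG hH f g I TPm); auto. }
  assert (Tfx : ~ Tor (f x)) by (intro Q; apply Tx, TP; auto).
  assert (Tfy : ~ Tor (f y)) by (intro Q; apply Ty, TP; auto).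
  destruct (mk_nT hH f x Tx Tfx) as [Ex Sx]. destruct (mk_nT hH f y Ty Tfy) as [Ey Sy].
  assert (Tmx : ~ Tor (mk f x)) by (intro Q; apply Tx, TPm; auto).
  assert (Tmy : ~ Tor (mk f y)) by (intro Q; apply Ty, TPm; auto).
  rewrite (C_iff_sgn hG) by auto. rewrite (C_iff_sgn hH) by auto. rewrite Sx, Sy.
  destruct (classic (y = x)) as [->|Nxy]. { split; intros [A _]; exfalso; eapply adj_irr; eauto. }
  destruct (classic (y = inv x)) as [->|Nxi].
  { rewrite (mk_inv hG hH f g I) by auto.
    split; intros [_ Q]; exfalso; [rewrite (sgn_inv hG) in Q|rewrite (sgn_inv hG) in Q]; auto; tauto. }
  assert (B1 : powerZpm_adj H (mk f x) (mk f y) <-> powerZpm_adj H (f x) (f y)).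
  { assert (N1 : f x <> f y) by (intro E; apply Nxy; apply (iso_inj _ _ _ _ I); auto).
    assert (N2 : f x <> inv (f y)).
    { intro E. apply Nxi. apply (iso_inj _ _ _ _ I). rewrite (iso_inv hG hH f g I) by auto.
      rewrite E, inv_inv; auto. }
    assert (N3 : f y <> inv (f x)) by (intro E; apply N2; rewrite E, inv_inv; auto).
    assert (N1' : f y <> f x) by auto.
    assert (R1 : forall u, u = f x \/ u = inv (f x) ->
       (powerZpm_adj H u (f y) <-> powerZpm_adj H (f x) (f y))).
    { intros u [->| ->]. tauto. split; intro A; apply adj_sym; apply adj_sym in A.
      apply (proj2 (B_twin_repl hH (f y) (f x) N1' N3)); auto.
      apply (proj1 (B_twin_repl hH (f y) (f x) N1' N3)); auto. }
    assert (R2 : forall u v, u = f x \/ u = inv (f x) -> v = f y \/ v = inv (f y) ->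
       (powerZpm_adj H u v <-> powerZpm_adj H (f x) (f y))).
    { intros u v Hu [->| ->]. apply R1; auto.
      rewrite <- (B_twin_repl hH u (f y)). apply R1; auto.
      destruct Hu as [->| ->]; [auto | intro E; apply N3; congruence].
      destruct Hu as [->| ->]; [auto | intro E; apply N1; rewrite <- (inv_inv hH (f x)), E, inv_inv; auto]. }
    apply R2; auto. }
  rewrite B1, <- K3. tauto.
Qed.


Lemma eqv_reach {L : Loop} (hL : power_assoc L) (x y : L) : eqv x y <-> reach (powerN_adj L) x y.
Proof. split.
  - intros [a [b [Ha [Hb E]]]].
    assert (R : forall (u : L) c, 0 < c -> reach (powerN_adj L) u (zp u c)).
    { intros u c Hc. destruct (classic (zp u c = u)) as [Q|Q]. rewrite Q; constructor.
      apply reach1. apply adjC; auto. split; auto. exists c. split; auto. }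
    eapply reach_trans. apply (R x a Ha). rewrite E.
    assert (R2 := R y b Hb). clear -R2 hL. induction R2. constructor.
    eapply reach_trans; eauto. apply reach1, adj_sym; auto.
  - intros H. induction H. apply eqv_refl. eapply eqv_trans; eauto. apply C_eqv; auto.
Qed.

Lemma iso_eqv {G H : Loop} (hG : power_assoc G) (hH : power_assoc H) f g :
  isoF (powerN_adj G) (powerN_adj H) f g -> forall x y, eqv x y -> eqv (f x) (f y).
Proof. intros I x y E. apply eqv_reach; auto. apply (reach_iso _ _ _ _ I). apply eqv_reach; auto. Qed.

Definition sgm {G H : Loop} (f : G -> H) (g : H -> G) (x : G) : G := g (inv (f (inv x))).
Definition it {G H : Loop} (f : G -> H) (g : H -> G) (n : nat) (x : G) : G := Nat.iter n (sgm f g) x.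

Lemma sgm_inv {G H : Loop} (hG : power_assoc G) (hH : power_assoc H) (f : G -> H) g :
  (forall a, g (f a) = a) -> (forall b, f (g b) = b) -> forall x, sgm f g (inv (sgm f g x)) = inv x.
Proof. intros K1 K2 x. unfold sgm. rewrite (inv_inv hG), K2, (inv_inv hH), K1. auto. Qed.

Lemma it_S {G H : Loop} (f : G -> H) g n x : it f g (S n) x = sgm f g (it f g n x).
Proof. reflexivity. Qed.
Lemma it_S' {G H : Loop} (f : G -> H) g n x : it f g (S n) x = it f g n (sgm f g x).
Proof. unfold it. rewrite Nat.iter_succ_r. auto. Qed.
Lemma it_add {G H : Loop} (f : G -> H) g n m x : it f g (n + m) x = it f g n (it f g m x).
Proof. unfold it. apply Nat.iter_add. Qed.

Lemma it_inv {G H : Loop} (hG : power_assoc G) (hH : power_assoc H) (f : G -> H) g :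
  (forall a, g (f a) = a) -> (forall b, f (g b) = b) ->
  forall n x, it f g n (inv (it f g n x)) = inv x.
Proof. intros K1 K2 n. induction n; intros x. reflexivity.
  rewrite (it_S f g n x), it_S'. rewrite sgm_inv by auto. auto. Qed.

Lemma sgm_eqv {G H : Loop} (hG : power_assoc G) (hH : power_assoc H) f g :
  isoF (powerN_adj G) (powerN_adj H) f g -> forall x y, eqv x y -> eqv (sgm f g x) (sgm f g y).
Proof. intros I x y E. unfold sgm. apply (iso_eqv hH hG g f (isoF_sym _ _ _ _ I)).
  apply eqv_inv; auto. apply (iso_eqv hG hH f g I). apply eqv_inv; auto. Qed.

Lemma sgm_eqv_rev {G H : Loop} (hG : power_assoc G) (hH : power_assoc H) f g :
  isoF (powerN_adj G) (powerN_adj H) f g -> forall x y, eqv (sgm f g x) (sgm f g y) -> eqv x y.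
Proof. intros I x y E. pose proof I as [K1 [K2 _]].
  rewrite <- (inv_inv hG x), <- (inv_inv hG y). rewrite <- (sgm_inv hG hH f g K1 K2 x), <- (sgm_inv hG hH f g K1 K2 y).
  apply eqv_inv; auto. apply (sgm_eqv hG hH f g I). apply eqv_inv; auto. Qed.

Lemma it_eqv {G H : Loop} (hG : power_assoc G) (hH : power_assoc H) f g :
  isoF (powerN_adj G) (powerN_adj H) f g -> forall n x y, eqv x y -> eqv (it f g n x) (it f g n y).
Proof. intros I n. induction n; intros x y E; auto. rewrite !it_S. apply (sgm_eqv hG hH f g I); auto. Qed.

Lemma it_eqv_rev {G H : Loop} (hG : power_assoc G) (hH : power_assoc H) f g :
  isoF (powerN_adj G) (powerN_adj H) f g -> forall n x y, eqv (it f g n x) (it f g n y) -> eqv x y.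
Proof. intros I n. induction n; intros x y E; auto. rewrite !it_S in E.
  apply IHn. apply (sgm_eqv_rev hG hH f g I); auto. Qed.

Lemma it_nT {G H : Loop} (hG : power_assoc G) (hH : power_assoc H) f g :
  isoF (powerN_adj G) (powerN_adj H) f g -> forall n x, ~ Tor x -> ~ Tor (it f g n x).
Proof. intros I. assert (TP := TorPres_C hG hH f g I). unfold TorPres in TP. pose proof I as [K1 [K2 _]].
  assert (TI : forall (L : Loop) (hL : power_assoc L) (z : L), Tor (inv z) -> Tor z).
  { intros L hL z Q. rewrite <- (inv_inv hL z). apply Tor_inv; auto. }
  induction n; intros x T; auto. rewrite it_S. unfold sgm. intro Q. apply (IHn x T).
  apply (TP (g _)) in Q. rewrite K2 in Q. apply TI in Q; auto. apply TP in Q.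
  apply TI in Q; auto. Qed.

Lemma parity {G H : Loop} (hG : power_assoc G) (hH : power_assoc H) f g :
  isoF (powerN_adj G) (powerN_adj H) f g -> forall n x, ~ Tor x -> ~ eqv (it f g n x) (inv x).
Proof.
  intros I n x T E. pose proof I as [K1 [K2 _]]. assert (TP := TorPres_C hG hH f g I). unfold TorPres in TP.
  destruct (Nat.Even_or_Odd n) as [[k Hk]|[k Hk]]; subst n.
  - replace (2 * k)%nat with (k + k)%nat in E by lia. rewrite it_add in E.
    apply eqv_inv in E; auto. rewrite inv_inv in E by auto.
    apply (it_eqv hG hH f g I k) in E. rewrite it_inv in E by auto.
    apply (not_eqv_inv hG (it f g k x)). apply (it_nT hG hH f g I); auto. apply eqv_sym; auto.
  - replace (2 * k + 1)%nat with (k + S k)%nat in E by lia. rewrite it_add, it_S in E.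
    set (y := it f g k x) in E.
    apply eqv_inv in E; auto. rewrite inv_inv in E by auto.
    apply (it_eqv hG hH f g I k) in E. rewrite it_inv in E by auto.
    (* E : eqv (inv (sgm y)) y *)
    assert (Ty : ~ Tor y) by (apply (it_nT hG hH f g I); auto).
    assert (Ty' : ~ Tor (inv y)) by (apply inv_nT; auto).
    unfold sgm in E. apply eqv_inv in E; auto. rewrite inv_inv in E by auto.
    apply (iso_eqv hG hH f g I) in E. rewrite K2 in E.
    apply (not_eqv_inv hH (f (inv y))). intro Q; apply Ty', TP; auto. apply eqv_sym; auto.
Qed.

Definition Qr {G H : Loop} (f : G -> H) g (x y : G) :=
  exists n, eqv (it f g n x) y \/ eqv (it f g n y) x.

Lemma Qr_refl {G H : Loop} (f : G -> H) g x : Qr f g x x.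
Proof. exists O. left. apply eqv_refl. Qed.
Lemma Qr_sym {G H : Loop} (f : G -> H) g x y : Qr f g x y -> Qr f g y x.
Proof. intros [n K]. exists n. tauto. Qed.

Lemma Qr_trans {G H : Loop} (hG : power_assoc G) (hH : power_assoc H) f g :
  isoF (powerN_adj G) (powerN_adj H) f g -> forall x y z, Qr f g x y -> Qr f g y z -> Qr f g x z.
Proof.
  intros I x y z [n [E|E]] [m [F|F]].
  - exists (m + n)%nat. left. rewrite it_add. eapply eqv_trans; eauto. apply (it_eqv hG hH f g I); auto.
  - destruct (le_lt_dec m n) as [Hmn|Hmn].
    + exists (n - m)%nat. left. apply (it_eqv_rev hG hH f g I m).
      rewrite <- it_add. replace (m + (n - m))%nat with n by lia.
      eapply eqv_trans; eauto. apply eqv_sym; auto.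
    + exists (m - n)%nat. right. apply (it_eqv_rev hG hH f g I n).
      rewrite <- it_add. replace (n + (m - n))%nat with m by lia.
      eapply eqv_trans; eauto. apply eqv_sym; auto.
  - destruct (le_lt_dec m n) as [Hmn|Hmn].
    + exists (n - m)%nat. right.
      replace n with ((n - m) + m)%nat in E by lia. rewrite it_add in E.
      eapply (eqv_trans hG); [|exact E]. apply (it_eqv hG hH f g I). apply eqv_sym; auto.
    + exists (m - n)%nat. left.
      replace m with ((m - n) + n)%nat in F by lia. rewrite it_add in F.
      eapply (eqv_trans hG); [|exact F]. apply (it_eqv hG hH f g I). apply eqv_sym; auto.
  - exists (n + m)%nat. right. rewrite it_add. eapply (eqv_trans hG); [|exact E].
    apply (it_eqv hG hH f g I); auto.
Qed.

Lemma Qr_inv {G H : Loop} (hG : power_assoc G) (hH : power_assoc H) f g :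
  isoF (powerN_adj G) (powerN_adj H) f g -> forall x y, Qr f g x y -> Qr f g (inv x) (inv y).
Proof. intros I. pose proof I as [K1 [K2 _]].
  assert (K : forall x y n, eqv (it f g n x) y -> eqv (it f g n (inv y)) (inv x)).
  { intros x y n E. apply eqv_inv in E; auto. apply (it_eqv hG hH f g I n) in E.
    rewrite it_inv in E by auto. apply eqv_sym; auto. }
  intros x y [n [E|E]]; exists n; [right|left]; apply K; auto. Qed.

Lemma notQ {G H : Loop} (hG : power_assoc G) (hH : power_assoc H) f g :
  isoF (powerN_adj G) (powerN_adj H) f g -> forall x, ~ Tor x -> ~ Qr f g x (inv x).
Proof. intros I x T [n [E|E]].
  - apply (parity hG hH f g I n x T E).
  - apply (parity hG hH f g I n (inv x)). apply inv_nT; auto. rewrite inv_inv; auto. Qed.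

Definition rep2 {G H : Loop} (f : G -> H) g (x : G) : G :=
  epsilon (inhabits lone) (fun r => Qr f g r x \/ Qr f g r (inv x)).
Definition mm {G H : Loop} (f : G -> H) g (x : G) : Prop := Qr f g (rep2 f g x) x.

Lemma rep2_spec {G H : Loop} (f : G -> H) g x : Qr f g (rep2 f g x) x \/ Qr f g (rep2 f g x) (inv x).
Proof. unfold rep2. apply epsilon_spec. exists x. left. apply Qr_refl. Qed.

Lemma rep2_ext {G H : Loop} (f : G -> H) g x y :
  (forall r, (Qr f g r x \/ Qr f g r (inv x)) <-> (Qr f g r y \/ Qr f g r (inv y))) ->
  rep2 f g x = rep2 f g y.
Proof. intros K. unfold rep2. f_equal. apply functional_extensionality. intro r.
  apply propositional_extensionality. apply K. Qed.

Lemma mm_inv {G H : Loop} (hG : power_assoc G) (hH : power_assoc H) f g :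
  isoF (powerN_adj G) (powerN_adj H) f g -> forall x, ~ Tor x -> (mm f g (inv x) <-> ~ mm f g x).
Proof. intros I x T. unfold mm.
  rewrite (rep2_ext f g (inv x) x) by (intro r; rewrite inv_inv; tauto).
  destruct (rep2_spec f g x) as [E|E]; split; intros Q.
  - intros Q'. apply (notQ hG hH f g I x T). eapply Qr_trans; eauto. apply Qr_sym; auto.
  - exfalso. apply Q. auto.
  - intros Q'. apply (notQ hG hH f g I x T). eapply Qr_trans; eauto. apply Qr_sym; auto.
  - auto.
Qed.

Lemma mm_Q {G H : Loop} (hG : power_assoc G) (hH : power_assoc H) f g :
  isoF (powerN_adj G) (powerN_adj H) f g -> forall x y, Qr f g x y -> (mm f g x <-> mm f g y).
Proof. intros I x y Qxy. unfold mm.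
  assert (Qi := Qr_inv hG hH f g I x y Qxy).
  rewrite (rep2_ext f g x y).
  - split; intro Q; eapply Qr_trans; eauto. apply Qr_sym; auto.
  - intro r. split; (intros [Q|Q]; [left|right]; eapply Qr_trans; eauto; apply Qr_sym; auto).
Qed.

Lemma C_B {L : Loop} (hL : power_assoc L) (u v : L) : powerN_adj L u v -> powerZpm_adj L u v.
Proof. rewrite adjC, adjB by auto. intros [H [n [Sn E]]]. split; auto. exists n. unfold SB, SC in *. split; auto. lia. Qed.

Lemma F3 {L : Loop} (hL : power_assoc L) (u v : L) : ~ Tor u -> ~ Tor v ->
  (powerZpm_adj L u v <-> powerN_adj L u v \/ powerN_adj L u (inv v) \/ v = inv u).
Proof. intros Tu Tv. split.
  - intros A. pose proof A as A'. apply adjB in A'; auto. destruct A' as [Huv [n [Sn E]]]. unfold SB in Sn.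
    destruct (Z_lt_le_dec 0 n).
    { left. apply adjC; auto. split; auto. exists n. split; auto. }
    destruct (Z.eq_dec n (-1)).
    { subst n. right; right. destruct E as [E|E]. rewrite E. apply zp_m1; auto.
      rewrite E, zp_m1, inv_inv by auto. auto. }
    right; left. assert (Tiv : ~ Tor (inv v)) by (apply inv_nT; auto).
    apply adjC; auto. destruct E as [E|E].
    + split.
      * intro F. assert (F' : inv v = zp u 1) by (rewrite zp_1; auto).
        rewrite E, <- zp_opp in F' by auto. apply notTor_inj in F'; auto. lia.
      * exists (- n). split. unfold SC; lia. left. rewrite E, zp_opp by auto. auto.
    + split.
      * intro F. assert (F' : u = zp (inv v) 1) by (rewrite zp_1; auto).
        rewrite E, <- (Z.opp_involutive n), <- zp_inv in F' by auto. apply notTor_inj in F'; auto. lia.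
      * exists (- n). split. unfold SC; lia. right. rewrite E, zp_inv by auto. rewrite Z.opp_involutive. auto.
  - intros [A|[A| ->]].
    + apply C_B; auto.
    + assert (H1 : u <> inv v) by (intro E; subst; eapply adj_irr; eauto).
      assert (H2 : u <> v).
      { intro E; subst. apply (not_eqv_inv hL v Tv). apply C_eqv; auto. }
      apply (B_twin_repl hL u v H2 H1). apply C_B; auto.
    + apply adjB; auto. split. intro E. apply (inv_ne hL u Tu). auto.
      exists (-1). split. unfold SB; lia. left. rewrite zp_m1; auto.
Qed.

Definition mk2 {G H : Loop} (f : G -> H) g (x : G) : H :=
  if excluded_middle_informative (Tor x) then f x
  else if excluded_middle_informative (mm f g x) then f x else inv (f (inv x)).
Definition mk2' {G H : Loop} (f : G -> H) g (y : H) : G :=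
  if excluded_middle_informative (Tor y) then g y
  else if excluded_middle_informative (mm f g (g y)) then g y else inv (g (inv y)).

Lemma mk2_T {G H : Loop} (f : G -> H) g x : Tor x -> mk2 f g x = f x.
Proof. unfold mk2. destruct excluded_middle_informative; tauto. Qed.
Lemma mk2_m {G H : Loop} (f : G -> H) g x : ~ Tor x -> mm f g x -> mk2 f g x = f x.
Proof. unfold mk2. repeat destruct excluded_middle_informative; tauto. Qed.
Lemma mk2_n {G H : Loop} (f : G -> H) g x : ~ Tor x -> ~ mm f g x -> mk2 f g x = inv (f (inv x)).
Proof. unfold mk2. repeat destruct excluded_middle_informative; tauto. Qed.
Lemma mk2'_T {G H : Loop} (f : G -> H) g y : Tor y -> mk2' f g y = g y.
Proof. unfold mk2'. destruct excluded_middle_informative; tauto. Qed.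
Lemma mk2'_m {G H : Loop} (f : G -> H) g y : ~ Tor y -> mm f g (g y) -> mk2' f g y = g y.
Proof. unfold mk2'. repeat destruct excluded_middle_informative; tauto. Qed.
Lemma mk2'_n {G H : Loop} (f : G -> H) g y : ~ Tor y -> ~ mm f g (g y) -> mk2' f g y = inv (g (inv y)).
Proof. unfold mk2'. repeat destruct excluded_middle_informative; tauto. Qed.

Lemma Q_sgm {G H : Loop} (f : G -> H) g x : Qr f g x (sgm f g x).
Proof. exists 1%nat. left. apply eqv_refl. Qed.

Lemma CtoB {G H : Loop} (hG : power_assoc G) (hH : power_assoc H) :
  graph_iso (powerN_adj G) (powerN_adj H) -> graph_iso (powerZpm_adj G) (powerZpm_adj H).
Proof.
  intros [f [g I]]. assert (TP := TorPres_C hG hH f g I). unfold TorPres in TP.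
  pose proof I as [K1 [K2 K3]].
  assert (TPg : forall y, Tor y <-> Tor (g y)) by (intro y; rewrite TP, K2; tauto).
  assert (TI : forall (L : Loop) (hL : power_assoc L) (z : L), Tor (inv z) -> Tor z).
  { intros L hL z Q. rewrite <- (inv_inv hL z). apply Tor_inv; auto. }
  assert (NTf : forall x, ~ Tor x -> ~ Tor (f x)) by (intros x T Q; apply T, TP; auto).
  assert (NTg : forall y, ~ Tor y -> ~ Tor (g y)) by (intros y T Q; apply T, TPg; auto).
  assert (Ig := isoF_sym _ _ _ _ I).
  set (k := mk2 f g). set (k' := mk2' f g).
  assert (TPk : forall x, Tor x <-> Tor (k x)).
  { intro x. unfold k. destruct (classic (Tor x)) as [T|T].
    { rewrite mk2_T; auto. }
    destruct (classic (mm f g x)). { rewrite mk2_m; auto. }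
    rewrite mk2_n; auto. split; intro Q. tauto. exfalso. apply (NTf (inv x)). apply inv_nT; auto.
    apply TI; auto. }
  assert (Kinv : forall x, ~ Tor x -> k (inv x) = inv (k x)).
  { intros x T. assert (Ti : ~ Tor (inv x)) by (apply inv_nT; auto). unfold k.
    destruct (classic (mm f g x)) as [M|M].
    - rewrite (mk2_m f g x T M). rewrite mk2_n; auto. rewrite inv_inv; auto.
      rewrite (mm_inv hG hH f g I x T). tauto.
    - rewrite (mk2_n f g x T M). rewrite mk2_m; auto. rewrite inv_inv; auto.
      rewrite (mm_inv hG hH f g I x T). auto. }
  assert (Ck : forall x y, powerN_adj G x y <-> powerN_adj H (k x) (k y)).
  { assert (TC : forall x y, Tor x -> (powerN_adj G x y <-> powerN_adj H (k x) (k y))).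
    { intros x y Tx. unfold k. rewrite (mk2_T f g x Tx). destruct (classic (Tor y)) as [Ty|Ty].
      rewrite (mk2_T f g y Ty). apply K3.
      split; intro A; exfalso.
      apply Ty. eapply (C_T_step hG); eauto.
      apply Ty. apply (TPk y). apply (C_T_step hH (f x) (k y)); auto. apply TP; auto. }
    assert (Hmix : forall x y, ~ Tor x -> ~ Tor y -> mm f g x -> ~ mm f g y ->
       ~ powerN_adj H (f x) (inv (f (inv y)))).
    { intros x y Tx Ty Mx My A. apply C_eqv in A; auto. apply (iso_eqv hH hG g f Ig) in A.
      rewrite K1 in A. apply My. apply (mm_Q hG hH f g I x y); auto.
      eapply (Qr_trans hG hH f g I); [|apply Qr_sym, Q_sgm]. exists O. left. exact A. }
    assert (Hq : forall x y, powerN_adj G x y -> (mm f g x <-> mm f g y)).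
    { intros x y A. apply (mm_Q hG hH f g I). exists O. left. apply C_eqv; auto. }
    intros x y. destruct (classic (Tor x)) as [Tx|Tx]. apply TC; auto.
    destruct (classic (Tor y)) as [Ty|Ty].
    { split; intro A; apply adj_sym; [apply (TC y x Ty)|apply (TC y x Ty)]; apply adj_sym; auto. }
    unfold k. destruct (classic (mm f g x)) as [Mx|Mx]; destruct (classic (mm f g y)) as [My|My].
    - rewrite (mk2_m f g x), (mk2_m f g y); auto.
    - rewrite (mk2_m f g x), (mk2_n f g y); auto. split; intro A; exfalso.
      apply My, (Hq x y A); auto. apply (Hmix x y); auto.
    - rewrite (mk2_n f g x), (mk2_m f g y); auto. split; intro A; exfalso.
      apply Mx, (Hq x y A); auto. apply (Hmix y x); auto. apply adj_sym; auto.
    - rewrite (mk2_n f g x), (mk2_n f g y); auto.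
      rewrite <- (adj_inv hH SC (f (inv x)) (f (inv y))). rewrite <- K3.
      apply (adj_inv hG SC x y). }
  assert (NTi : forall (L : Loop) (hL : power_assoc L) (z : L), ~ Tor z -> ~ Tor (inv z))
    by (intros; apply inv_nT; auto).
  assert (RT1 : forall x, k' (k x) = x).
  { intros x. unfold k, k'. destruct (classic (Tor x)) as [Tx|Tx].
    { rewrite (mk2_T f g x Tx), mk2'_T; auto. apply TP; auto. }
    destruct (classic (mm f g x)) as [Mx|Mx].
    - rewrite (mk2_m f g x Tx Mx), mk2'_m; auto. rewrite K1; auto.
    - rewrite (mk2_n f g x Tx Mx). rewrite mk2'_n.
      + rewrite (inv_inv hH), K1, (inv_inv hG); auto.
      + apply NTi; auto.
      + change (g (inv (f (inv x)))) with (sgm f g x).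
        rewrite <- (mm_Q hG hH f g I x _ (Q_sgm f g x)). auto. }
  assert (RT2 : forall y, k (k' y) = y).
  { intros y. unfold k, k'. destruct (classic (Tor y)) as [Ty|Ty].
    { rewrite (mk2'_T f g y Ty), mk2_T; auto. apply TPg; auto. }
    destruct (classic (mm f g (g y))) as [My|My].
    - rewrite (mk2'_m f g y Ty My), mk2_m; auto.
    - rewrite (mk2'_n f g y Ty My).
      assert (Tgi : ~ Tor (g (inv y))) by (apply NTg, NTi; auto).
      rewrite mk2_n; auto.
      + rewrite (inv_inv hG), K2, (inv_inv hH); auto.
      + rewrite (mm_inv hG hH f g I _ Tgi). intro Q. apply Q.
        assert (E : g (inv y) = sgm f g (inv (g y))).
        { unfold sgm. rewrite (inv_inv hG), K2. auto. }
        rewrite E. rewrite <- (mm_Q hG hH f g I _ _ (Q_sgm f g _)).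
        rewrite (mm_inv hG hH f g I); auto. }
  exists k, k'. split; [exact RT1|split; [exact RT2|]].
  assert (Kinj : forall a b, k a = k b -> a = b) by (intros a b E; rewrite <- (RT1 a), E, RT1; auto).
  assert (TB : forall x y, Tor x -> (powerZpm_adj G x y <-> powerZpm_adj H (k x) (k y))).
  { intros x y Tx. rewrite (F2 hG x y Tx), (F2 hH (k x) (k y)) by (apply TPk; auto). apply Ck. }
  intros x y. destruct (classic (Tor x)) as [Tx|Tx]. apply TB; auto.
  destruct (classic (Tor y)) as [Ty|Ty].
  { split; intro A; apply adj_sym; [apply (TB y x Ty)|apply (TB y x Ty)]; apply adj_sym; auto. }
  assert (Tkx : ~ Tor (k x)) by (intro Q; apply Tx, TPk; auto).
  assert (Tky : ~ Tor (k y)) by (intro Q; apply Ty, TPk; auto).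
  rewrite (F3 hG x y Tx Ty), (F3 hH (k x) (k y) Tkx Tky).
  rewrite <- (Kinv y Ty), <- (Kinv x Tx), <- !Ck.
  assert (E : k y = k (inv x) <-> y = inv x) by (split; intro; subst; auto).
  rewrite E. tauto.
Qed.


Theorem mainTheorem6 (G H : Loop) (hG : power_assoc G) (hH : power_assoc H) :
  (graph_iso (power_adj G) (power_adj H) <->
   graph_iso (powerZpm_adj G) (powerZpm_adj H)) /\
  (graph_iso (powerZpm_adj G) (powerZpm_adj H) <->
   graph_iso (powerN_adj G) (powerN_adj H)).
Proof.
  split; split.
  - apply AtoB; auto.
  - apply BtoA; auto.
  - apply BtoC; auto.
  - apply CtoB; auto.
Qed.
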